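(* There do not exist symmetric homogeneous stable means $K,M$, each possessing a symmetric asymptotic expansion, such that the first Seiffert mean $P$ is $(K,M)$-stabilizable, i.e. such that $P(s,t)=K\big(P(s,M(s,t)),P(M(s,t),t)\big)$ for all $s,t>0$. The same holds with $P$ replaced by the second Seiffert mean $T$ or by the Neuman–Sándor mean $NS$.
   Context: For $s,t>0$, $s\ne t$: $P(s,t)=\frac{t-s}{2\arcsin\frac{t-s}{t+s}}$, $T(s,t)=\frac{t-s}{2\arctan\frac{t-s}{t+s}}$, $NS(s,t)=\frac{t-s}{2\operatorname{arcsinh}\frac{t-s}{t+s}}$, each equal to $s$ when $s=t$. A bi-variate mean is $M:(0,\infty)^2\to(0,\infty)$ with $\min\le M\le\max$; symmetric, homogeneous (degree 1). $M$ is stable if $M(s,t)=M\big(M(s,M(s,t)),M(M(s,t),t)\big)$. For stable $K,M$, $N$ is $(K,M)$-stabilizable if $N(s,t)=K\big(N(s,M(s,t)),N(M(s,t),t)\big)$ for all $s,t>0$. A mean has a symmetric asymptotic expansion with coefficients $(a_n)$ if for every fixed real $t$ and $N\ge0$, $M(x-t,x+t)=\sum_{n=0}^Na_nt^{2n}x^{-2n+1}+o(x^{-2N+1})$ as $x\to\infty$. *)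

(* Defs.v *)
From Stdlib Require Import Reals Lra.
Open Scope R_scope.

Definition SeiffertP (s t : R) : R :=
  if Req_EM_T s t then s else (t - s) / (2 * asin ((t - s) / (t + s))).
Definition SeiffertT (s t : R) : R :=
  if Req_EM_T s t then s else (t - s) / (2 * atan ((t - s) / (t + s))).
Definition NeumanSandor (s t : R) : R :=
  if Req_EM_T s t then s else (t - s) / (2 * arcsinh ((t - s) / (t + s))).

Definition is_mean (M : R -> R -> R) : Prop :=
  forall s t, 0 < s -> 0 < t -> Rmin s t <= M s t <= Rmax s t.
Definition is_symmetric (M : R -> R -> R) : Prop :=
  forall s t, 0 < s -> 0 < t -> M s t = M t s.
Definition is_homogeneous (M : R -> R -> R) : Prop :=
  forall l s t, 0 < l -> 0 < s -> 0 < t -> M (l * s) (l * t) = l * M s t.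
Definition is_stable (M : R -> R -> R) : Prop :=
  forall s t, 0 < s -> 0 < t ->
    M s t = M (M s (M s t)) (M (M s t) t).
Definition stabilizable (N K M : R -> R -> R) : Prop :=
  forall s t, 0 < s -> 0 < t ->
    N s t = K (N s (M s t)) (N (M s t) t).

(* Symmetric asymptotic expansion with coefficients a:
   for every real t and N, M(x-t,x+t) = sum_{n=0}^N a_n t^(2n) x^(-2n+1)
   + o(x^(-2N+1)) as x -> +oo. Here x^(-2n+1) = x / x^(2n). *)
Definition asym_sum (a : nat -> R) (t x : R) (N : nat) : R :=
  sum_f_R0 (fun n => a n * t ^ (2 * n) * (x / x ^ (2 * n))) N.
Definition has_sym_asym_expansion (M : R -> R -> R) (a : nat -> R) : Prop :=
  forall (t : R) (N : nat) (eps : R), 0 < eps ->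
    exists X : R, forall x : R, X < x ->
      Rabs (M (x - t) (x + t) - asym_sum a t x N) <= eps * (x / x ^ (2 * N)).

Definition good_mean (M : R -> R -> R) : Prop :=
  is_mean M /\ is_symmetric M /\ is_homogeneous M /\ is_stable M /\
  exists a : nat -> R, has_sym_asym_expansion M a.

(* Main.v *)
Require Import Defs.
From Stdlib Require Import Reals Lra Lia Psatz List.
From Coquelicot Require Import Coquelicot.
Import ListNotations.
Open Scope R_scope.

Fixpoint peval (l : list R) (z : R) : R :=
  match l with [] => 0 | c :: l' => c + z * peval l' z end.
Fixpoint padd (a b : list R) : list R :=
  match a, b with
  | [], _ => b
  | _, [] => a
  | x :: a', y :: b' => (x + y) :: padd a' b'
  end.
Fixpoint pscal (c : R) (a : list R) : list R :=
  match a with [] => [] | x :: a' => (c * x) :: pscal c a' end.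
Fixpoint pmul (a b : list R) : list R :=
  match a with [] => [] | x :: a' => padd (pscal x b) (0 :: pmul a' b) end.
Definition psub a b := padd a (pscal (-1) b).

Lemma peval_add a b z : peval (padd a b) z = peval a z + peval b z.
Proof.
  revert b; induction a as [|x a IH]; intros [|y b]; simpl; try ring.
  rewrite IH; ring.
Qed.
Lemma peval_scal c a z : peval (pscal c a) z = c * peval a z.
Proof. induction a as [|x a IH]; simpl; [ring|]. rewrite IH; ring. Qed.
Lemma peval_mul a b z : peval (pmul a b) z = peval a z * peval b z.
Proof.
  induction a as [|x a IH]; simpl; [ring|].
  rewrite peval_add, peval_scal; simpl; rewrite IH; ring.
Qed.
Lemma peval_sub a b z : peval (psub a b) z = peval a z - peval b z.
Proof. unfold psub; rewrite peval_add, peval_scal; ring. Qed.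

Fixpoint pabs (l : list R) : R := match l with [] => 0 | c :: l' => Rabs c + pabs l' end.
Lemma pabs_ge0 l : 0 <= pabs l.
Proof. induction l; simpl; [lra|]. pose proof (Rabs_pos a); lra. Qed.
Lemma peval_bound l z : Rabs z <= 1 -> Rabs (peval l z) <= pabs l.
Proof.
  intros Hz; induction l as [|c l IH]; simpl.
  - rewrite Rabs_R0; lra.
  - eapply Rle_trans; [apply Rabs_triang|]. rewrite Rabs_mult.
    assert (Rabs z * Rabs (peval l z) <= 1 * pabs l).
    { apply Rmult_le_compat; auto using Rabs_pos. }
    lra.
Qed.

Lemma peval_shift n d z : (forall i, (i < n)%nat -> nth i d 0 = 0) ->
  peval d z = z ^ n * peval (skipn n d) z.
Proof.
  revert d; induction n as [|n IH]; intros d Hd; simpl; [ring|].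
  destruct d as [|c d]; simpl.
  - ring.
  - pose proof (Hd 0%nat ltac:(lia)) as H0; simpl in H0. rewrite H0, (IH d).
    + ring.
    + intros i Hi. apply (Hd (S i)). lia.
Qed.

Lemma nth_padd a b i : nth i (padd a b) 0 = nth i a 0 + nth i b 0.
Proof.
  revert b i; induction a as [|x a IH]; intros [|y b] [|i]; simpl; try ring; auto.
Qed.
Lemma nth_pscal c a i : nth i (pscal c a) 0 = c * nth i a 0.
Proof.
  revert i; induction a as [|x a IH]; intros [|i]; simpl; try ring; auto.
Qed.

Definition ap (f g : R -> R) : Prop :=
  forall eps, 0 < eps -> exists d, 0 < d /\ forall z, 0 < z < d -> Rabs (f z - g z) <= eps * z ^ 6.
Definition coeq (a b : list R) : Prop := forall i, (i <= 6)%nat -> nth i a 0 = nth i b 0.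

Lemma ap_trans f g h : ap f g -> ap g h -> ap f h.
Proof.
  intros H1 H2 eps He.
  destruct (H1 (eps/2) ltac:(lra)) as [d1 [Hd1 P1]].
  destruct (H2 (eps/2) ltac:(lra)) as [d2 [Hd2 P2]].
  exists (Rmin d1 d2); split; [apply Rmin_pos; lra|].
  intros z Hz. pose proof (Rmin_l d1 d2); pose proof (Rmin_r d1 d2).
  specialize (P1 z ltac:(lra)); specialize (P2 z ltac:(lra)).
  replace (f z - h z) with ((f z - g z) + (g z - h z)) by ring.
  eapply Rle_trans; [apply Rabs_triang|]. lra.
Qed.

Lemma ap_sym f g : ap f g -> ap g f.
Proof.
  intros H eps He; destruct (H eps He) as [d [Hd P]]; exists d; split; auto.
  intros z Hz; rewrite Rabs_minus_sym; auto.
Qed.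

Lemma ap_ext f g h : (exists d, 0 < d /\ forall z, 0 < z < d -> f z = g z) -> ap g h -> ap f h.
Proof.
  intros [d0 [Hd0 E]] H eps He. destruct (H eps He) as [d [Hd P]].
  exists (Rmin d0 d); split; [apply Rmin_pos; lra|].
  intros z Hz. pose proof (Rmin_l d0 d); pose proof (Rmin_r d0 d).
  rewrite E by lra. apply P; lra.
Qed.

Lemma pow_small z n : 0 <= z <= 1 -> z ^ S n <= z ^ n.
Proof. intros Hz. simpl. pose proof (pow_le z n ltac:(lra)). nra. Qed.

Lemma pbound_near l : forall z, 0 < z < 1 -> Rabs (peval l z) <= pabs l.
Proof. intros z Hz. apply peval_bound. rewrite Rabs_pos_eq; lra. Qed.

Lemma ap_trunc a b : coeq a b -> ap (peval a) (peval b).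
Proof.
  intros Hc eps He.
  set (d := psub a b).
  assert (Hd : forall i, (i < 7)%nat -> nth i d 0 = 0).
  { intros i Hi. unfold d, psub. rewrite nth_padd, nth_pscal, (Hc i ltac:(lia)). ring. }
  pose proof (pabs_ge0 (skipn 7 d)) as HB.
  pose proof (pbound_near (skipn 7 d)) as HBz.
  set (B := pabs (skipn 7 d)) in *. clearbody B.
  exists (Rmin 1 (eps / (B + 1))). split.
  { apply Rmin_pos; [lra|]. apply Rdiv_lt_0_compat; lra. }
  intros z Hz. pose proof (Rmin_l 1 (eps/(B+1))); pose proof (Rmin_r 1 (eps/(B+1))).
  rewrite <- peval_sub. change (psub a b) with d. rewrite (peval_shift 7 d z Hd).
  rewrite Rabs_mult. rewrite Rabs_pos_eq by (apply pow_le; lra).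
  pose proof (HBz z ltac:(lra)) as H1.
  assert (z * B <= eps).
  { assert (z <= eps/(B+1)) by lra.
    apply Rle_trans with (eps / (B+1) * (B+1)); [|right; field; lra].
    apply Rle_trans with (z * (B+1)); [nra|]. apply Rmult_le_compat_r; lra. }
  pose proof (pow_le z 6 ltac:(lra)).
  replace (z ^ 7) with (z ^ 6 * z) by ring.
  apply Rle_trans with (z ^ 6 * z * B).
  - apply Rmult_le_compat_l; [nra|]. exact H1.
  - nra.
Qed.


Lemma z6_le1 z : 0 < z < 1 -> z ^ 6 <= 1.
Proof. intros Hz. pose proof (pow_lt_1_compat z 6 ltac:(lra) ltac:(lia)); lra. Qed.

Lemma ap_bnd f L : ap f (peval L) -> exists d B, 0 < d /\ forall z, 0 < z < d -> Rabs (f z) <= B.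
Proof.
  intros H. destruct (H 1 ltac:(lra)) as [d [Hd P]].
  exists (Rmin d 1), (pabs L + 1). split; [apply Rmin_pos; lra|].
  intros z Hz. pose proof (Rmin_l d 1); pose proof (Rmin_r d 1).
  specialize (P z ltac:(lra)). pose proof (pbound_near L z ltac:(lra)).
  pose proof (z6_le1 z ltac:(lra)).
  replace (f z) with ((f z - peval L z) + peval L z) by ring.
  eapply Rle_trans; [apply Rabs_triang|]. lra.
Qed.

Lemma ap_add f1 f2 g1 g2 : ap f1 g1 -> ap f2 g2 -> ap (fun z => f1 z + f2 z) (fun z => g1 z + g2 z).
Proof.
  intros H1 H2 eps He.
  destruct (H1 (eps/2) ltac:(lra)) as [d1 [Hd1 P1]].
  destruct (H2 (eps/2) ltac:(lra)) as [d2 [Hd2 P2]].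
  exists (Rmin d1 d2); split; [apply Rmin_pos; lra|].
  intros z Hz. pose proof (Rmin_l d1 d2); pose proof (Rmin_r d1 d2).
  specialize (P1 z ltac:(lra)); specialize (P2 z ltac:(lra)).
  replace (f1 z + f2 z - (g1 z + g2 z)) with ((f1 z - g1 z) + (f2 z - g2 z)) by ring.
  eapply Rle_trans; [apply Rabs_triang|]. lra.
Qed.

Lemma ap_scal c f g : ap f g -> ap (fun z => c * f z) (fun z => c * g z).
Proof.
  intros H eps He.
  destruct (H (eps / (Rabs c + 1))) as [d [Hd P]].
  { apply Rdiv_lt_0_compat; [lra|]. pose proof (Rabs_pos c); lra. }
  exists d; split; auto. intros z Hz. specialize (P z Hz).
  replace (c * f z - c * g z) with (c * (f z - g z)) by ring.
  rewrite Rabs_mult. pose proof (Rabs_pos c). pose proof (pow_le z 6 ltac:(lra)).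
  apply Rle_trans with (Rabs c * (eps / (Rabs c + 1) * z ^ 6)).
  { apply Rmult_le_compat_l; auto. }
  apply Rle_trans with ((Rabs c + 1) * (eps / (Rabs c + 1) * z ^ 6)).
  { apply Rmult_le_compat_r; [|lra]. apply Rmult_le_pos; auto. apply Rlt_le, Rdiv_lt_0_compat; lra. }
  right; field; lra.
Qed.

Lemma ap_mul f1 f2 L1 L2 : ap f1 (peval L1) -> ap f2 (peval L2) ->
  ap (fun z => f1 z * f2 z) (fun z => peval L1 z * peval L2 z).
Proof.
  intros H1 H2.
  destruct (ap_bnd f1 L1 H1) as [d0 [B [Hd0 PB]]].
  intros eps He.
  pose proof (pabs_ge0 L2). pose proof (pbound_near L2) as HL2. remember (pabs L2) as B2.
  assert (HB : 0 <= B). { specialize (PB (d0/2) ltac:(lra)). pose proof (Rabs_pos (f1 (d0/2))); lra. }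
  destruct (H1 (eps / (2 * (B2 + 1)))) as [d1 [Hd1 P1]]. { apply Rdiv_lt_0_compat; lra. }
  destruct (H2 (eps / (2 * (B + 1)))) as [d2 [Hd2 P2]]. { apply Rdiv_lt_0_compat; lra. }
  exists (Rmin (Rmin d0 1) (Rmin d1 d2)). split.
  { repeat apply Rmin_pos; lra. }
  intros z Hz.
  pose proof (Rmin_l (Rmin d0 1) (Rmin d1 d2)); pose proof (Rmin_r (Rmin d0 1) (Rmin d1 d2)).
  pose proof (Rmin_l d0 1); pose proof (Rmin_r d0 1); pose proof (Rmin_l d1 d2); pose proof (Rmin_r d1 d2).
  specialize (P1 z ltac:(lra)); specialize (P2 z ltac:(lra)); specialize (PB z ltac:(lra)).
  pose proof (HL2 z ltac:(lra)) as H9.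
  pose proof (pow_le z 6 ltac:(lra)).
  replace (f1 z * f2 z - peval L1 z * peval L2 z) with
    (f1 z * (f2 z - peval L2 z) + (f1 z - peval L1 z) * peval L2 z) by ring.
  eapply Rle_trans; [apply Rabs_triang|]. rewrite !Rabs_mult.
  assert (E1 : Rabs (f1 z) * Rabs (f2 z - peval L2 z) <= B * (eps / (2 * (B + 1)) * z ^ 6)).
  { apply Rmult_le_compat; auto using Rabs_pos. }
  assert (E2 : Rabs (f1 z - peval L1 z) * Rabs (peval L2 z) <= (eps / (2 * (B2 + 1)) * z ^ 6) * B2).
  { apply Rmult_le_compat; auto using Rabs_pos. }
  assert (E3 : B * (eps / (2 * (B + 1)) * z ^ 6) <= eps / 2 * z ^ 6).
  { replace (B * (eps / (2 * (B + 1)) * z ^ 6)) with ((B / (B+1)) * (eps / 2 * z ^ 6)) by (field; lra).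
    assert (B / (B+1) <= 1). { apply Rmult_le_reg_r with (B+1); [lra|]. field_simplify; lra. }
    assert (0 <= eps / 2 * z ^ 6) by nra. nra. }
  assert (E4 : (eps / (2 * (B2 + 1)) * z ^ 6) * B2 <= eps / 2 * z ^ 6).
  { replace ((eps / (2 * (B2 + 1)) * z ^ 6) * B2) with ((B2 / (B2+1)) * (eps / 2 * z ^ 6)) by (field; lra).
    assert (B2 / (B2+1) <= 1). { apply Rmult_le_reg_r with (B2+1); [lra|]. field_simplify; lra. }
    assert (0 <= eps / 2 * z ^ 6) by nra. nra. }
  lra.
Qed.

Lemma ap_mulL f1 f2 L1 L2 L : ap f1 (peval L1) -> ap f2 (peval L2) -> coeq (pmul L1 L2) L ->
  ap (fun z => f1 z * f2 z) (peval L).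
Proof.
  intros H1 H2 Hc. eapply ap_trans; [apply ap_mul; eauto|].
  eapply ap_ext; [|apply (ap_trunc _ _ Hc)].
  exists 1; split; [lra|]. intros z _. symmetry; apply peval_mul.
Qed.

Lemma ap_addL f1 f2 L1 L2 L : ap f1 (peval L1) -> ap f2 (peval L2) -> coeq (padd L1 L2) L ->
  ap (fun z => f1 z + f2 z) (peval L).
Proof.
  intros H1 H2 Hc. eapply ap_trans; [apply ap_add; eauto|].
  eapply ap_ext; [|apply (ap_trunc _ _ Hc)].
  exists 1; split; [lra|]. intros z _. symmetry; apply peval_add.
Qed.

Lemma ap_subL f1 f2 L1 L2 L : ap f1 (peval L1) -> ap f2 (peval L2) -> coeq (psub L1 L2) L ->
  ap (fun z => f1 z - f2 z) (peval L).
Proof.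
  intros H1 H2 Hc.
  assert (H2' : ap (fun z => -1 * f2 z) (fun z => -1 * peval L2 z)) by (apply ap_scal; auto).
  eapply ap_trans; [|apply (ap_trunc _ _ Hc)].
  eapply ap_ext; [|apply ap_sym; eapply ap_ext; [|apply ap_sym; apply (ap_add _ _ _ _ H1 H2')]].
  - exists 1; split; [lra|]. intros z _. ring.
  - exists 1; split; [lra|]. intros z _. rewrite peval_sub. ring.
Qed.

Lemma ap_scalL c f L1 L : ap f (peval L1) -> coeq (pscal c L1) L -> ap (fun z => c * f z) (peval L).
Proof.
  intros H Hc. eapply ap_trans; [apply ap_scal; eauto|].
  eapply ap_ext; [|apply (ap_trunc _ _ Hc)].
  exists 1; split; [lra|]. intros z _. symmetry; apply peval_scal.
Qed.

Lemma ap_refl f : ap f f.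
Proof. intros eps He; exists 1; split; [lra|]; intros z Hz.
  unfold Rminus; rewrite Rplus_opp_r, Rabs_R0. pose proof (pow_le z 6 ltac:(lra)); nra. Qed.

Lemma ap_constL c : ap (fun _ => c) (peval [c]).
Proof. eapply ap_ext; [|apply ap_refl]. exists 1; split; [lra|]; intros; simpl; ring. Qed.
Lemma ap_idL : ap (fun z => z) (peval [0; 1]).
Proof. eapply ap_ext; [|apply ap_refl]. exists 1; split; [lra|]; intros; simpl; ring. Qed.

Lemma peval_cons c l z : peval (c :: l) z = c + z * peval l z.
Proof. reflexivity. Qed.

Lemma ap_small f L : ap f (peval L) -> nth 0 L 0 = 0 ->
  exists C d, 0 < d /\ 0 <= C /\ forall z, 0 < z < d -> Rabs (f z) <= C * z.
Proof.
  intros H H0. destruct (H 1 ltac:(lra)) as [d [Hd P]].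
  destruct L as [|c L]; simpl in H0.
  - exists 1, (Rmin d 1). split; [apply Rmin_pos; lra|]. split; [lra|].
    intros z Hz. pose proof (Rmin_l d 1); pose proof (Rmin_r d 1). specialize (P z ltac:(lra)).
    simpl in P. rewrite Rminus_0_r in P. pose proof (pow_small z 5 ltac:(lra)).
    pose proof (pow_le z 5 ltac:(lra)). pose proof (z6_le1 z ltac:(lra)).
    assert (z ^ 6 <= z). { simpl in *. assert (z^5 <= 1) by (pose proof (pow_lt_1_compat z 5 ltac:(lra) ltac:(lia)); lra). nra. }
    lra.
  - subst c. exists (pabs L + 1), (Rmin d 1). split; [apply Rmin_pos; lra|]. split; [pose proof (pabs_ge0 L); lra|].
    intros z Hz. pose proof (Rmin_l d 1); pose proof (Rmin_r d 1). specialize (P z ltac:(lra)).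
    rewrite peval_cons in P. pose proof (pbound_near L z ltac:(lra)).
    assert (z ^ 6 <= z). { assert (z^5 <= 1) by (pose proof (pow_lt_1_compat z 5 ltac:(lra) ltac:(lia)); lra). simpl in *. nra. }
    replace (f z) with ((f z - (0 + z * peval L z)) + z * peval L z) by ring.
    eapply Rle_trans; [apply Rabs_triang|]. rewrite Rabs_mult, (Rabs_pos_eq z) by lra.
    nra.
Qed.

Lemma ap_lower f L : ap f (peval L) -> nth 0 L 0 <> 0 ->
  exists d, 0 < d /\ forall z, 0 < z < d ->
    Rabs (nth 0 L 0) / 2 <= Rabs (f z) /\ Rabs (nth 0 L 0) / 2 <= Rabs (peval L z).
Proof.
  intros H H0. pose proof (Rabs_pos_lt _ H0) as Hc. remember (nth 0 L 0) as c.
  destruct (H (Rabs c / 4) ltac:(lra)) as [d [Hd P]].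
  assert (HL : exists d', 0 < d' /\ forall z, 0 < z < d' -> Rabs (peval L z - c) <= Rabs c / 4).
  { destruct L as [|c0 L]; [simpl in Heqc; subst c; rewrite Rabs_R0 in Hc; lra|]. simpl in Heqc; subst c.
    exists (Rmin 1 (Rabs c0 / 4 / (pabs L + 1))). split.
    { apply Rmin_pos; [lra|]. pose proof (pabs_ge0 L). apply Rdiv_lt_0_compat; lra. }
    intros z Hz. pose proof (Rmin_l 1 (Rabs c0 / 4 / (pabs L + 1))); pose proof (Rmin_r 1 (Rabs c0 / 4 / (pabs L + 1))).
    rewrite peval_cons. replace (c0 + z * peval L z - c0) with (z * peval L z) by ring.
    rewrite Rabs_mult, (Rabs_pos_eq z) by lra. pose proof (pbound_near L z ltac:(lra)).
    pose proof (pabs_ge0 L).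
    apply Rle_trans with (z * (pabs L + 1)); [nra|].
    apply Rle_trans with (Rabs c0 / 4 / (pabs L + 1) * (pabs L + 1)); [apply Rmult_le_compat_r; lra|].
    right; field; lra. }
  destruct HL as [d' [Hd' P']].
  exists (Rmin (Rmin d d') 1). split; [repeat apply Rmin_pos; lra|].
  intros z Hz. pose proof (Rmin_l (Rmin d d') 1); pose proof (Rmin_r (Rmin d d') 1).
  pose proof (Rmin_l d d'); pose proof (Rmin_r d d').
  specialize (P z ltac:(lra)); specialize (P' z ltac:(lra)). pose proof (z6_le1 z ltac:(lra)).
  assert (Rabs (f z - peval L z) <= Rabs c / 4).
  { eapply Rle_trans; [exact P|]. pose proof (pow_le z 6 ltac:(lra)). nra. }
  pose proof (Rabs_triang_inv c (c - peval L z)).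
  pose proof (Rabs_triang_inv (peval L z) (peval L z - f z)).
  replace (c - (c - peval L z)) with (peval L z) in H7 by ring.
  replace (peval L z - (peval L z - f z)) with (f z) in H8 by ring.
  rewrite Rabs_minus_sym in P'. rewrite Rabs_minus_sym in H6.
  split; lra.
Qed.

Lemma ap_inv f L : ap f (peval L) -> nth 0 L 0 <> 0 ->
  ap (fun z => / f z) (fun z => / peval L z).
Proof.
  intros H H0. destruct (ap_lower f L H H0) as [d0 [Hd0 P0]].
  assert (Hc : 0 < Rabs (nth 0 L 0) / 2) by (pose proof (Rabs_pos_lt _ H0); lra).
  remember (Rabs (nth 0 L 0) / 2) as c.
  intros eps He. destruct (H (eps * c * c)) as [d [Hd P]]. { apply Rmult_lt_0_compat; [|lra]; nra. }
  exists (Rmin d0 d); split; [apply Rmin_pos; lra|].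
  intros z Hz. pose proof (Rmin_l d0 d); pose proof (Rmin_r d0 d).
  destruct (P0 z ltac:(lra)) as [A1 A2]. specialize (P z ltac:(lra)).
  assert (f z <> 0) by (intro E; rewrite E, Rabs_R0 in A1; lra).
  assert (peval L z <> 0) by (intro E; rewrite E, Rabs_R0 in A2; lra).
  replace (/ f z - / peval L z) with ((peval L z - f z) / (f z * peval L z)) by (field; auto).
  unfold Rdiv. rewrite Rabs_mult, Rabs_inv, Rabs_mult, Rabs_minus_sym.
  assert (c * c <= Rabs (f z) * Rabs (peval L z)) by (apply Rmult_le_compat; lra).
  apply Rle_trans with (eps * c * c * z ^ 6 * / (c * c)).
  - apply Rmult_le_compat; auto using Rabs_pos.
    + left; apply Rinv_0_lt_compat. nra.
    + apply Rinv_le_contravar; nra.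
  - right; field; lra.
Qed.

Lemma ap_invL f L1 L : ap f (peval L1) -> nth 0 L1 0 <> 0 -> coeq (pmul L1 L) [1] ->
  ap (fun z => / f z) (peval L).
Proof.
  intros H H0 Hc. eapply ap_trans; [apply ap_inv; eauto|].
  (* / L1 - L = (1 - L1 L) / L1 *)
  destruct (ap_lower _ _ (ap_refl (peval L1)) H0) as [d0 [Hd0 P0]].
  assert (Hc0 : 0 < Rabs (nth 0 L1 0) / 2) by (pose proof (Rabs_pos_lt _ H0); lra).
  remember (Rabs (nth 0 L1 0) / 2) as c.
  pose proof (ap_trunc _ _ Hc) as T.
  intros eps He. destruct (T (eps * c)) as [d [Hd P]]; [nra|].
  exists (Rmin d0 d); split; [apply Rmin_pos; lra|].
  intros z Hz. pose proof (Rmin_l d0 d); pose proof (Rmin_r d0 d).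
  destruct (P0 z ltac:(lra)) as [_ A2]. specialize (P z ltac:(lra)).
  rewrite peval_mul in P. simpl in P.
  assert (peval L1 z <> 0) by (intro E; rewrite E, Rabs_R0 in A2; lra).
  replace (/ peval L1 z - peval L z) with (- (peval L1 z * peval L z - (1 + z * 0)) / peval L1 z) by (field; auto).
  unfold Rdiv. rewrite Rabs_mult, Rabs_inv, Rabs_Ropp.
  apply Rle_trans with (eps * c * z ^ 6 * / c).
  - apply Rmult_le_compat; auto using Rabs_pos.
    + left; apply Rinv_0_lt_compat. nra.
    + apply Rinv_le_contravar; nra.
  - right; field; lra.
Qed.


Lemma peval_skipn k d z : peval (skipn k d) z = nth k d 0 + z * peval (skipn (S k) d) z.
Proof.
  revert d; induction k as [|k IH]; intros [|c d]; simpl; try ring.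
  apply IH.
Qed.

Lemma zero_coeffs d : ap (peval d) (fun _ => 0) -> forall k, (k <= 6)%nat -> nth k d 0 = 0.
Proof.
  intros H. intro k. induction k as [k IHk] using (well_founded_induction Wf_nat.lt_wf).
  intros Hk.
  assert (Hlow : forall i, (i < k)%nat -> nth i d 0 = 0) by (intros i Hi; apply IHk; lia).
  destruct (Req_dec (nth k d 0) 0) as [E|E]; [exact E|exfalso].
  set (c := nth k d 0) in *.
  pose proof (Rabs_pos_lt c E) as Hc.
  pose proof (pabs_ge0 (skipn (S k) d)) as HB.
  pose proof (pbound_near (skipn (S k) d)) as HBz.
  remember (pabs (skipn (S k) d)) as B.
  destruct (H (Rabs c / 2) ltac:(lra)) as [d0 [Hd0 P]].
  set (z := Rmin (d0/2) (Rmin (1/2) (Rabs c / 4 / (B + 1)))).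
  assert (Hz1 : z <= d0/2) by apply Rmin_l.
  assert (Hz2 : z <= 1/2) by (eapply Rle_trans; [apply Rmin_r|apply Rmin_l]).
  assert (Hz3 : z <= Rabs c / 4 / (B+1)) by (eapply Rle_trans; [apply Rmin_r|apply Rmin_r]).
  assert (Hz0 : 0 < z).
  { unfold z; repeat apply Rmin_pos; try lra. apply Rdiv_lt_0_compat; lra. }
  clearbody z.
  specialize (P z ltac:(lra)). rewrite Rminus_0_r in P.
  rewrite (peval_shift k d z Hlow), peval_skipn in P. fold c in P.
  specialize (HBz z ltac:(lra)).
  assert (Hzk : 0 < z ^ k) by (apply pow_lt; lra).
  assert (H6k : z ^ 6 <= z ^ k).
  { replace 6%nat with (k + (6 - k))%nat by lia. rewrite pow_add.
    assert (z ^ (6 - k) <= 1).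
    { destruct (Nat.eq_dec (6-k) 0) as [E0|E0]; [rewrite E0; simpl; lra|].
      pose proof (pow_lt_1_compat z (6-k) ltac:(lra) ltac:(lia)); lra. }
    pose proof (pow_le z (6-k) ltac:(lra)). nra. }
  rewrite Rabs_mult, (Rabs_pos_eq (z ^ k)) in P by lra.
  assert (Rabs (c + z * peval (skipn (S k) d) z) <= Rabs c / 2).
  { apply Rmult_le_reg_l with (z ^ k); [lra|]. nra. }
  assert (Rabs (z * peval (skipn (S k) d) z) <= Rabs c / 4).
  { rewrite Rabs_mult, Rabs_pos_eq by lra.
    apply Rle_trans with (z * (B+1)); [nra|].
    apply Rle_trans with (Rabs c / 4 / (B + 1) * (B+1)); [apply Rmult_le_compat_r; lra|].
    right; field; lra. }
  pose proof (Rabs_triang_inv c (- (z * peval (skipn (S k) d) z))).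
  rewrite Rabs_Ropp in H2.
  replace (c - - (z * peval (skipn (S k) d) z)) with (c + z * peval (skipn (S k) d) z) in H2 by ring.
  lra.
Qed.

Lemma ap_poly_coeffs a b : ap (peval a) (peval b) -> coeq a b.
Proof.
  intros H.
  assert (Hd : ap (peval (psub a b)) (fun _ => 0)).
  { intros eps He. destruct (H eps He) as [d [Hd P]]. exists d; split; auto.
    intros z Hz. rewrite peval_sub, Rminus_0_r. apply P; auto. }
  intros i Hi. pose proof (zero_coeffs _ Hd i Hi). unfold psub in H0.
  rewrite nth_padd, nth_pscal in H0. lra.
Qed.

Ltac coeqtac := let i := fresh "i" in let Hi := fresh "Hi" in
  intros i Hi; do 7 (destruct i as [|i]; [cbn; field|]); exfalso; lia.

Definition expn_on (S : R -> Prop) (f : R -> R) (c1 c2 c3 : R) : Prop :=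
  forall eps, 0 < eps -> exists d, 0 < d /\ forall w, S w -> Rabs w < d ->
    Rabs (f w - (1 + c1 * w ^ 2 + c2 * w ^ 4 + c3 * w ^ 6)) <= eps * Rabs w ^ 6.

Lemma ap_comp (S : R -> Prop) f c1 c2 c3 W L : expn_on S f c1 c2 c3 -> ap W (peval L) -> nth 0 L 0 = 0 ->
  (exists d, 0 < d /\ forall z, 0 < z < d -> S (W z)) ->
  ap (fun z => f (W z)) (fun z => 1 + c1 * W z ^ 2 + c2 * W z ^ 4 + c3 * W z ^ 6).
Proof.
  intros He HW H0 [dS [HdS PS]].
  destruct (ap_small W L HW H0) as [C [d1 [Hd1 [HC P1]]]].
  intros eps Heps.
  assert (HC6 : 0 <= C ^ 6) by (apply pow_le; lra).
  destruct (He (eps / (C ^ 6 + 1))) as [d [Hd P]]. { apply Rdiv_lt_0_compat; lra. }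
  exists (Rmin (Rmin dS d1) (d / (C + 1))). split.
  { repeat apply Rmin_pos; try lra. apply Rdiv_lt_0_compat; lra. }
  intros z Hz.
  pose proof (Rmin_l (Rmin dS d1) (d / (C + 1))); pose proof (Rmin_r (Rmin dS d1) (d / (C + 1))).
  pose proof (Rmin_l dS d1); pose proof (Rmin_r dS d1).
  specialize (P1 z ltac:(lra)). specialize (PS z ltac:(lra)).
  assert (HWd : Rabs (W z) < d).
  { eapply Rle_lt_trans; [exact P1|].
    apply Rle_lt_trans with (C * (d / (C+1))); [apply Rmult_le_compat_l; lra|].
    apply Rlt_le_trans with ((C + 1) * (d / (C + 1))); [|right; field; lra].
    apply Rmult_lt_compat_r; [apply Rdiv_lt_0_compat|]; lra. }
  specialize (P (W z) PS HWd).
  assert (HW6 : Rabs (W z) ^ 6 <= (C * z) ^ 6) by (apply pow_incr; split; [apply Rabs_pos|exact P1]).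
  rewrite Rpow_mult_distr in HW6.
  eapply Rle_trans; [exact P|].
  assert (0 < eps / (C ^ 6 + 1)) by (apply Rdiv_lt_0_compat; lra).
  pose proof (pow_le z 6 ltac:(lra)).
  apply Rle_trans with (eps / (C ^ 6 + 1) * (C ^ 6 * z ^ 6)); [apply Rmult_le_compat_l; lra|].
  replace (eps / (C ^ 6 + 1) * (C ^ 6 * z ^ 6)) with (eps * z ^ 6 * (C ^ 6 / (C ^ 6 + 1))) by (field; lra).
  assert (C ^ 6 / (C ^ 6 + 1) <= 1). { apply Rmult_le_reg_r with (C^6+1); [lra|]. field_simplify; lra. }
  assert (0 <= eps * z ^ 6) by nra. nra.
Qed.

Definition w1f (fM : R -> R) (z : R) := (fM z - (1 - z)) * / ((1 - z) + fM z).
Definition w2f (fM : R -> R) (z : R) := ((1 + z) - fM z) * / (fM z + (1 + z)).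
Definition Af (fM fN : R -> R) (z : R) := (((1 - z) + fM z) / 2) * fN (w1f fM z).
Definition Bf (fM fN : R -> R) (z : R) := ((fM z + (1 + z)) / 2) * fN (w2f fM z).
Definition rf (fM fN : R -> R) (z : R) := (Bf fM fN z - Af fM fN z) * / (Af fM fN z + Bf fM fN z).
Definition RHSf (fK fM fN : R -> R) (z : R) := ((Af fM fN z + Bf fM fN z) / 2) * fK (rf fM fN z).

Lemma expn_ap f c1 c2 c3 : expn_on (fun w => 0 <= w) f c1 c2 c3 ->
  ap (fun z => f z) (peval [(1); 0; (c1); 0; (c2); 0; (c3)]).
Proof.
  intros H eps He. destruct (H eps He) as [d [Hd P]]. exists d; split; auto.
  intros z Hz. specialize (P z ltac:(lra)). rewrite Rabs_pos_eq in P by lra.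
  replace (peval [(1); 0; (c1); 0; (c2); 0; (c3)] z) with (1 + c1 * z ^ 2 + c2 * z ^ 4 + c3 * z ^ 6)
    by (simpl; ring).
  apply P. lra.
Qed.

Lemma w1_nonneg fM : (forall z, 0 < z < 1 -> 1 - z <= fM z <= 1 + z) ->
  exists d, 0 < d /\ forall z, 0 < z < d -> 0 <= w1f fM z.
Proof.
  intros H. exists (1/2); split; [lra|]. intros z Hz. specialize (H z ltac:(lra)). unfold w1f.
  apply Rmult_le_pos; [lra|]. left; apply Rinv_0_lt_compat; lra.
Qed.
Lemma w2_nonneg fM : (forall z, 0 < z < 1 -> 1 - z <= fM z <= 1 + z) ->
  exists d, 0 < d /\ forall z, 0 < z < d -> 0 <= w2f fM z.
Proof.
  intros H. exists (1/2); split; [lra|]. intros z Hz. specialize (H z ltac:(lra)). unfold w2f.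
  apply Rmult_le_pos; [lra|]. left; apply Rinv_0_lt_compat; lra.
Qed.

Lemma w_pos_l s t : 0 < s -> 0 < t -> 0 < 1 - (t - s) / (t + s).
Proof. intros. replace (1 - (t - s) / (t + s)) with (2 * s / (t + s)) by (field; lra).
  apply Rdiv_lt_0_compat; lra. Qed.
Lemma w_pos_r s t : 0 < s -> 0 < t -> 0 < 1 + (t - s) / (t + s).
Proof. intros. replace (1 + (t - s) / (t + s)) with (2 * t / (t + s)) by (field; lra).
  apply Rdiv_lt_0_compat; lra. Qed.

Lemma rep_hom (X : R -> R -> R) : is_homogeneous X ->
  forall s t, 0 < s -> 0 < t -> X s t = ((s + t) / 2) * (fun w => X (1 - w) (1 + w)) ((t - s) / (t + s)).
Proof.
  intros Hh s t Hs Ht. cbv beta.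
  pose proof (Hh ((s + t) / 2) (1 - (t - s) / (t + s)) (1 + (t - s) / (t + s))
     ltac:(lra) (w_pos_l s t Hs Ht) (w_pos_r s t Hs Ht)) as E.
  assert (E1 : (s + t) / 2 * (1 - (t - s) / (t + s)) = s) by (field; lra).
  assert (E2 : (s + t) / 2 * (1 + (t - s) / (t + s)) = t) by (field; lra).
  rewrite E1, E2 in E. exact E.
Qed.

Lemma meanb_of (X : R -> R -> R) : is_mean X ->
  forall z, 0 <= z < 1 -> 1 - z <= X (1 - z) (1 + z) <= 1 + z.
Proof.
  intros Hm z Hz. pose proof (Hm (1 - z) (1 + z) ltac:(lra) ltac:(lra)) as E.
  rewrite Rmin_left in E by lra. rewrite Rmax_right in E by lra. exact E.
Qed.

Lemma a0_is_1 (X : R -> R -> R) a : is_mean X -> has_sym_asym_expansion X a -> a 0%nat = 1.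
Proof.
  intros Hm He. destruct (Req_dec (a 0%nat) 1) as [E|E]; [exact E|exfalso].
  assert (Hp : 0 < Rabs (a 0%nat - 1)) by (apply Rabs_pos_lt; lra).
  remember (Rabs (a 0%nat - 1)) as e.
  destruct (He 1 0%nat (e / 2) ltac:(lra)) as [X0 P].
  set (x := Rmax (Rabs X0 + 1) (Rmax 2 (4 / e))).
  assert (Hx1 : Rabs X0 + 1 <= x) by apply Rmax_l.
  assert (Hx2 : Rmax 2 (4 / e) <= x) by apply Rmax_r.
  pose proof (Rmax_l 2 (4/e)); pose proof (Rmax_r 2 (4/e)).
  pose proof (Rle_abs X0).
  clearbody x.
  specialize (P x ltac:(lra)). unfold asym_sum in P. simpl in P.
  replace (a 0%nat * 1 * (x / 1)) with (a 0%nat * x) in P by field.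
  replace (e / 2 * (x / 1)) with (e / 2 * x) in P by field.
  pose proof (Hm (x - 1) (x + 1) ltac:(lra) ltac:(lra)) as B.
  rewrite Rmin_left in B by lra. rewrite Rmax_right in B by lra.
  assert (Rabs (a 0%nat * x - x) <= e / 2 * x + 1).
  { replace (a 0%nat * x - x) with (- (X (x - 1) (x + 1) - a 0%nat * x) + (X (x - 1) (x + 1) - x)) by ring.
    eapply Rle_trans; [apply Rabs_triang|]. rewrite Rabs_Ropp.
    assert (Rabs (X (x - 1) (x + 1) - x) <= 1) by (apply Rabs_le; lra). lra. }
  replace (a 0%nat * x - x) with ((a 0%nat - 1) * x) in H2 by ring.
  rewrite Rabs_mult, (Rabs_pos_eq x), <- Heqe in H2 by lra.
  assert (4 <= e * x).
  { apply Rle_trans with (e * (4 / e)); [right; field; lra|]. apply Rmult_le_compat_l; lra. }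
  lra.
Qed.

Lemma expn_of (X : R -> R -> R) a : is_mean X -> is_homogeneous X -> has_sym_asym_expansion X a ->
  expn_on (fun w => 0 <= w) (fun w => X (1 - w) (1 + w)) (a 1%nat) (a 2%nat) (a 3%nat).
Proof.
  intros Hm Hh He. pose proof (a0_is_1 X a Hm He) as Ha0.
  intros eps Heps. destruct (He 1 3%nat eps Heps) as [X0 P].
  exists (Rmin (1/2) (/ (Rabs X0 + 1))). split.
  { apply Rmin_pos; [lra|]. apply Rinv_0_lt_compat. pose proof (Rabs_pos X0); lra. }
  intros w Hw0 Hwd. rewrite (Rabs_pos_eq w) in Hwd |- * by lra.
  pose proof (Rmin_l (1/2) (/ (Rabs X0 + 1))); pose proof (Rmin_r (1/2) (/ (Rabs X0 + 1))).
  destruct (Req_dec w 0) as [Hw|Hw].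
  - subst w. pose proof (Hm (1 - 0) (1 + 0) ltac:(lra) ltac:(lra)) as B.
    rewrite Rmin_left in B by lra. rewrite Rmax_right in B by lra.
    replace (X (1 - 0) (1 + 0)) with 1 by lra. simpl. rewrite Rabs_right by lra. lra.
  - assert (Hwp : 0 < w) by lra.
    set (x := / w).
    assert (Hxw : x * w = 1) by (unfold x; field; lra).
    assert (Hx : X0 < x).
    { pose proof (Rle_abs X0). unfold x.
      apply Rlt_le_trans with (Rabs X0 + 1); [lra|].
      rewrite <- (Rinv_inv (Rabs X0 + 1)). apply Rinv_le_contravar; [lra|]. lra. }
    specialize (P x Hx).
    pose proof (Hh x (1 - w) (1 + w) ltac:(unfold x; apply Rinv_0_lt_compat; lra) ltac:(lra) ltac:(lra)) as Hom.
    replace (x * (1 - w)) with (x - 1) in Hom by (unfold x; field; lra).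
    replace (x * (1 + w)) with (x + 1) in Hom by (unfold x; field; lra).
    rewrite Hom in P.
    assert (HS : asym_sum a 1 x 3 = x * (a 0%nat + a 1%nat * w ^ 2 + a 2%nat * w ^ 4 + a 3%nat * w ^ 6)).
    { unfold asym_sum, x. simpl. field. lra. }
    rewrite HS, Ha0 in P.
    replace (x * X (1 - w) (1 + w) - x * (1 + a 1%nat * w ^ 2 + a 2%nat * w ^ 4 + a 3%nat * w ^ 6))
      with (x * (X (1 - w) (1 + w) - (1 + a 1%nat * w ^ 2 + a 2%nat * w ^ 4 + a 3%nat * w ^ 6))) in P by ring.
    replace (eps * (x / x ^ (2 * 3))) with (x * (eps * w ^ 6)) in P by (unfold x; simpl; field; lra).
    rewrite Rabs_mult, (Rabs_pos_eq x) in P by (unfold x; left; apply Rinv_0_lt_compat; lra).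
    assert (0 < x) by (unfold x; apply Rinv_0_lt_compat; lra).
    apply Rmult_le_reg_l with x; auto.
Qed.

Lemma expn_even f c1 c2 c3 : expn_on (fun w => 0 <= w) f c1 c2 c3 ->
  (forall w, 0 <= w < 1 -> f (- w) = f w) -> expn_on (fun _ => True) f c1 c2 c3.
Proof.
  intros H He eps Heps. destruct (H eps Heps) as [d [Hd P]].
  exists (Rmin d 1); split; [apply Rmin_pos; lra|].
  intros w _ Hw. pose proof (Rmin_l d 1); pose proof (Rmin_r d 1).
  destruct (Rle_lt_dec 0 w) as [Hw0|Hw0].
  - apply P; auto; lra.
  - rewrite Rabs_left in Hw by lra.
    assert (Ef : f w = f (- w)) by (rewrite <- (He (- w)) by lra; rewrite Ropp_involutive; reflexivity).
    rewrite Ef, <- (Rabs_Ropp w).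
    pose proof (P (- w) ltac:(lra) ltac:(rewrite Rabs_pos_eq; lra)) as Q.
    replace (1 + c1 * w ^ 2 + c2 * w ^ 4 + c3 * w ^ 6) with (1 + c1 * (- w) ^ 2 + c2 * (- w) ^ 4 + c3 * (- w) ^ 6) by ring.
    exact Q.
Qed.

Lemma even_of (X : R -> R -> R) : is_symmetric X ->
  forall w, 0 <= w < 1 -> (fun w => X (1 - w) (1 + w)) (- w) = (fun w => X (1 - w) (1 + w)) w.
Proof.
  intros Hs w Hw. cbv beta. replace (1 - - w) with (1 + w) by ring. replace (1 + - w) with (1 - w) by ring.
  apply Hs; lra.
Qed.

Lemma lower_of_expn f c1 c2 c3 : expn_on (fun w => 0 <= w) f c1 c2 c3 ->
  exists d, 0 < d /\ forall w, 0 <= w < d -> 1 / 2 <= f w.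
Proof.
  intros H. destruct (H 1 ltac:(lra)) as [d [Hd P]].
  remember (Rabs c1 + Rabs c2 + Rabs c3 + 1) as C eqn:HCdef.
  assert (HC : 1 <= C) by (rewrite HCdef; pose proof (Rabs_pos c1); pose proof (Rabs_pos c2); pose proof (Rabs_pos c3); lra).
  exists (Rmin d (Rmin 1 (/ (2 * C)))). split.
  { repeat apply Rmin_pos; try lra. apply Rinv_0_lt_compat; lra. }
  intros w Hw. pose proof (Rmin_l d (Rmin 1 (/ (2 * C)))); pose proof (Rmin_r d (Rmin 1 (/ (2 * C)))).
  pose proof (Rmin_l 1 (/ (2 * C))); pose proof (Rmin_r 1 (/ (2 * C))).
  specialize (P w ltac:(lra) ltac:(rewrite Rabs_pos_eq; lra)). rewrite (Rabs_pos_eq w) in P by lra.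
  assert (Hw2 : w ^ 2 <= w) by (simpl; nra).
  assert (Hw4 : w ^ 4 <= w) by (simpl; assert (w*w <= 1) by nra; assert (w*(w*w) <= 1) by nra; nra).
  assert (Hw6 : w ^ 6 <= w) by (simpl; assert (w*w <= 1) by nra; assert (w*(w*w) <= 1) by nra;
     assert (w*(w*(w*w)) <= 1) by nra; assert (w*(w*(w*(w*w))) <= 1) by nra; nra).
  assert (Hw2' : 0 <= w ^ 2) by (apply pow_le; lra).
  assert (Hw4' : 0 <= w ^ 4) by (apply pow_le; lra).
  assert (Hw6' : 0 <= w ^ 6) by (apply pow_le; lra).
  assert (E : Rabs (c1 * w ^ 2 + c2 * w ^ 4 + c3 * w ^ 6) + 1 * w ^ 6 <= C * w).
  { rewrite HCdef.
    eapply Rle_trans; [apply Rplus_le_compat_r; eapply Rle_trans; [apply Rabs_triang|apply Rplus_le_compat_r; apply Rabs_triang]|].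
    rewrite !Rabs_mult, !(Rabs_pos_eq (w ^ _)) by auto.
    pose proof (Rabs_pos c1); pose proof (Rabs_pos c2); pose proof (Rabs_pos c3). nra. }
  assert (C * w <= 1/2).
  { apply Rle_trans with (C * / (2 * C)); [apply Rmult_le_compat_l; lra|]. right; field; lra. }
  pose proof (Rabs_triang_inv (f w - 1) (c1 * w ^ 2 + c2 * w ^ 4 + c3 * w ^ 6)).
  replace (f w - 1 - (c1 * w ^ 2 + c2 * w ^ 4 + c3 * w ^ 6)) with (f w - (1 + c1 * w ^ 2 + c2 * w ^ 4 + c3 * w ^ 6)) in H5 by ring.
  assert (Rabs (f w - 1) <= 1/2) by lra.
  pose proof (Rle_abs (1 - f w)). rewrite Rabs_minus_sym in H7. lra.
Qed.

Lemma glue (Nf Kf Mf : R -> R -> R) (fN fK fM : R -> R) :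
  (forall s t, 0 < s -> 0 < t -> Kf s t = ((s + t) / 2) * fK ((t - s) / (t + s))) ->
  (forall s t, 0 < s -> 0 < t -> Mf s t = ((s + t) / 2) * fM ((t - s) / (t + s))) ->
  (forall s t, 0 < s -> 0 < t -> Nf s t = ((s + t) / 2) * fN ((t - s) / (t + s))) ->
  (forall z, 0 < z < 1 -> 1 - z <= fM z <= 1 + z) ->
  (exists d, 0 < d /\ forall w, 0 <= w < d -> 1 / 2 <= fN w) ->
  stabilizable Nf Kf Mf ->
  exists d, 0 < d /\ forall z, 0 < z < d -> fN z = RHSf fK fM fN z.
Proof.
  intros RK RM RN HmM [dN [HdN PN]] Hst.
  exists (Rmin (1/2) (dN/2)). split; [apply Rmin_pos; lra|].
  intros z Hz. pose proof (Rmin_l (1/2) (dN/2)); pose proof (Rmin_r (1/2) (dN/2)).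
  pose proof (Hst (1 - z) (1 + z) ltac:(lra) ltac:(lra)) as E.
  assert (Hw : (1 + z - (1 - z)) / (1 + z + (1 - z)) = z) by (field; lra).
  assert (EG : Mf (1 - z) (1 + z) = fM z) by (rewrite RM, Hw by lra; field).
  assert (EN : Nf (1 - z) (1 + z) = fN z) by (rewrite RN, Hw by lra; field).
  rewrite EN, EG in E.
  destruct (HmM z ltac:(lra)) as [G1 G2].
  assert (EA : Nf (1 - z) (fM z) = Af fM fN z).
  { rewrite RN by lra. unfold Af, w1f. replace (fM z + (1 - z)) with ((1 - z) + fM z) by ring. reflexivity. }
  assert (EB : Nf (fM z) (1 + z) = Bf fM fN z).
  { rewrite RN by lra. unfold Bf, w2f. replace (1 + z + fM z) with (fM z + (1 + z)) by ring. reflexivity. }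
  assert (Hw1 : 0 <= w1f fM z < dN).
  { unfold w1f. split.
    - apply Rmult_le_pos; [lra|]. left; apply Rinv_0_lt_compat; lra.
    - apply Rle_lt_trans with ((2 * z) * / 1); [|lra].
      apply Rmult_le_compat; try lra.
      + left; apply Rinv_0_lt_compat; lra.
      + apply Rinv_le_contravar; lra. }
  assert (Hw2 : 0 <= w2f fM z < dN).
  { unfold w2f. split.
    - apply Rmult_le_pos; [lra|]. left; apply Rinv_0_lt_compat; lra.
    - apply Rle_lt_trans with ((2 * z) * / 1); [|lra].
      apply Rmult_le_compat; try lra.
      + left; apply Rinv_0_lt_compat; lra.
      + apply Rinv_le_contravar; lra. }
  assert (HA : 0 < Af fM fN z).
  { unfold Af. pose proof (PN _ Hw1). apply Rmult_lt_0_compat; lra. }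
  assert (HB : 0 < Bf fM fN z).
  { unfold Bf. pose proof (PN _ Hw2). apply Rmult_lt_0_compat; lra. }
  rewrite EA, EB, RK in E by lra.
  rewrite E. unfold RHSf, rf. replace (Bf fM fN z + Af fM fN z) with (Af fM fN z + Bf fM fN z) by ring.
  reflexivity.
Qed.

Definition Ng (g : R -> R) (s t : R) : R :=
  if Req_EM_T s t then s else (t - s) / (2 * g ((t - s) / (t + s))).

Lemma Ng_val g w : 0 < w < 1 -> g w <> 0 -> Ng g (1 - w) (1 + w) = / (g w * / w).
Proof.
  intros Hw Hg. unfold Ng. destruct (Req_EM_T (1 - w) (1 + w)) as [E|E]; [lra|].
  replace ((1 + w - (1 - w)) / (1 + w + (1 - w))) with w by (field; lra).
  field; lra.
Qed.

Lemma Ng_zero g : Ng g (1 - 0) (1 + 0) = 1.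
Proof. unfold Ng. destruct (Req_EM_T (1 - 0) (1 + 0)) as [E|E]; [lra|exfalso; lra]. Qed.

Lemma rep_Ng g : (forall w, -1 < w < 1 -> w <> 0 -> g w <> 0) ->
  forall s t, 0 < s -> 0 < t -> Ng g s t = ((s + t) / 2) * (fun w => Ng g (1 - w) (1 + w)) ((t - s) / (t + s)).
Proof.
  intros Hg s t Hs Ht. cbv beta.
  pose proof (w_pos_l s t Hs Ht); pose proof (w_pos_r s t Hs Ht).
  destruct (Req_EM_T s t) as [E|E].
  - subst t. replace ((s - s) / (s + s)) with 0 by (field; lra).
    rewrite Ng_zero. unfold Ng. destruct (Req_EM_T s s) as [_|E]; [field|contradiction].
  - assert (Hw0 : (t - s) / (t + s) <> 0).
    { intro Z. apply E. assert (t - s = 0). { replace (t - s) with ((t - s) / (t + s) * (t + s)) by (field; lra). rewrite Z; ring. } lra. }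
    assert (Hg0 : g ((t - s) / (t + s)) <> 0) by (apply Hg; [split; lra|exact Hw0]).
    unfold Ng. destruct (Req_EM_T s t) as [E'|_]; [contradiction|].
    destruct (Req_EM_T (1 - (t - s) / (t + s)) (1 + (t - s) / (t + s))) as [E2|_].
    { exfalso. apply Hw0. lra. }
    replace ((1 + (t - s) / (t + s) - (1 - (t - s) / (t + s))) / (1 + (t - s) / (t + s) + (1 - (t - s) / (t + s))))
      with ((t - s) / (t + s)) by (field; lra).
    field. split; auto; lra.
Qed.

Lemma expn_Ng g T1 T2 T3 q1 q2 q3 :
  (forall w, 0 < w < 1 -> g w <> 0) ->
  ap (fun w => g w * / w) (peval [(1); 0; (q1); 0; (q2); 0; (q3)]) ->
  coeq (pmul [(1); 0; (q1); 0; (q2); 0; (q3)] [(1); 0; (T1); 0; (T2); 0; (T3)]) [1] ->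
  expn_on (fun w => 0 <= w) (fun w => Ng g (1 - w) (1 + w)) T1 T2 T3.
Proof.
  intros Hg Hq Hc.
  assert (H : ap (fun w => / (g w * / w)) (peval [(1); 0; (T1); 0; (T2); 0; (T3)])).
  { eapply ap_invL; [exact Hq| cbn; lra | exact Hc]. }
  assert (H' : ap (fun w => Ng g (1 - w) (1 + w)) (peval [(1); 0; (T1); 0; (T2); 0; (T3)])).
  { eapply ap_ext; [|exact H]. exists 1; split; [lra|]. intros z Hz. apply Ng_val; auto. }
  intros eps He. destruct (H' eps He) as [d [Hd P]]. exists (Rmin d 1); split; [apply Rmin_pos; lra|].
  intros w Hw0 Hwd. pose proof (Rmin_l d 1); pose proof (Rmin_r d 1).
  rewrite (Rabs_pos_eq w) in Hwd |- * by lra.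
  destruct (Req_dec w 0) as [Z|Z].
  - subst w. rewrite Ng_zero. simpl. rewrite Rabs_right by lra. lra.
  - specialize (P w ltac:(lra)).
    replace (peval [(1); 0; (T1); 0; (T2); 0; (T3)] w) with (1 + T1 * w ^ 2 + T2 * w ^ 4 + T3 * w ^ 6) in P by (simpl; ring).
    exact P.
Qed.

Lemma mvt_bound (g p g' p' : R -> R) (C : R) :
  g 0 = 0 -> p 0 = 0 ->
  (forall t, 0 <= t <= 1/2 -> derivable_pt_lim g t (g' t)) ->
  (forall t, 0 <= t <= 1/2 -> derivable_pt_lim p t (p' t)) ->
  (forall t, 0 <= t <= 1/2 -> Rabs (g' t - p' t) <= C * t ^ 8) ->
  forall w, 0 < w < 1/2 -> Rabs (g w - p w) <= C * w ^ 9.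
Proof.
  intros g0 p0 Dg Dp Hb w Hw.
  destruct (MVT_cor2 (fun t => g t - p t) (fun t => g' t - p' t) 0 w ltac:(lra)) as [c [Ec Hc]].
  { intros c Hc. apply derivable_pt_lim_minus; [apply Dg|apply Dp]; lra. }
  rewrite g0, p0 in Ec. replace (g w - p w) with ((g' c - p' c) * (w - 0)) by lra.
  rewrite Rabs_mult, (Rabs_pos_eq (w - 0)) by lra.
  pose proof (Hb c ltac:(lra)).
  assert (c ^ 8 <= w ^ 8) by (apply pow_incr; lra).
  assert (0 <= C * c ^ 8) by (eapply Rle_trans; [apply Rabs_pos|exact H]).
  assert (0 <= C).
  { destruct (Rle_dec 0 C); auto. exfalso. assert (0 < c ^ 8) by (apply pow_lt; lra). nra. }
  replace (C * w ^ 9) with ((C * w ^ 8) * (w - 0)) by (simpl; ring).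
  apply Rmult_le_compat_r; [lra|]. eapply Rle_trans; [exact H|]. apply Rmult_le_compat_l; auto.
Qed.

Lemma ap_from_bound (g : R -> R) q1 q2 q3 C :
  (forall w, 0 < w < 1/2 -> Rabs (g w - w * (1 + q1 * w ^ 2 + q2 * w ^ 4 + q3 * w ^ 6)) <= C * w ^ 9) ->
  ap (fun w => g w * / w) (peval [(1); 0; (q1); 0; (q2); 0; (q3)]).
Proof.
  intros Hb eps He.
  assert (HC : 0 <= C).
  { pose proof (Hb (1/4) ltac:(lra)). pose proof (Rabs_pos (g (1/4) - 1/4 * (1 + q1 * (1/4) ^ 2 + q2 * (1/4) ^ 4 + q3 * (1/4) ^ 6))).
    assert (0 < (1/4) ^ 9) by (apply pow_lt; lra).
    destruct (Rle_dec 0 C); auto. nra. }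
  exists (Rmin (1/2) (eps / (C + 1))). split; [apply Rmin_pos; [lra|apply Rdiv_lt_0_compat; lra]|].
  intros w Hw. pose proof (Rmin_l (1/2) (eps / (C + 1))); pose proof (Rmin_r (1/2) (eps / (C + 1))).
  specialize (Hb w ltac:(lra)).
  replace (peval [(1); 0; (q1); 0; (q2); 0; (q3)] w) with (1 + q1 * w ^ 2 + q2 * w ^ 4 + q3 * w ^ 6) by (simpl; ring).
  replace (g w * / w - (1 + q1 * w ^ 2 + q2 * w ^ 4 + q3 * w ^ 6))
    with ((g w - w * (1 + q1 * w ^ 2 + q2 * w ^ 4 + q3 * w ^ 6)) * / w) by (field; lra).
  rewrite Rabs_mult, (Rabs_pos_eq (/ w)) by (left; apply Rinv_0_lt_compat; lra).
  apply Rle_trans with (C * w ^ 9 * / w).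
  { apply Rmult_le_compat_r; auto. left; apply Rinv_0_lt_compat; lra. }
  replace (C * w ^ 9 * / w) with ((C * (w * w)) * w ^ 6) by (simpl; field; lra).
  pose proof (pow_le w 6 ltac:(lra)).
  apply Rmult_le_compat_r; auto.
  assert (w * w <= w) by nra.
  apply Rle_trans with (C * w); [apply Rmult_le_compat_l; auto|].
  apply Rle_trans with ((C + 1) * (eps / (C + 1))); [|right; field; lra].
  apply Rle_trans with ((C + 1) * w); [nra|]. apply Rmult_le_compat_l; lra.
Qed.

Lemma D_poly (q1 q2 q3 : R) t :
  derivable_pt_lim (fun t => t * (1 + q1 * t ^ 2 + q2 * t ^ 4 + q3 * t ^ 6)) t
    (1 + 3 * q1 * t ^ 2 + 5 * q2 * t ^ 4 + 7 * q3 * t ^ 6).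
Proof. apply is_derive_Reals. auto_derive; [auto|]. simpl; field. Qed.

Lemma gneq_asin w : -1 < w < 1 -> w <> 0 -> asin w <> 0.
Proof. intros Hw Hn E. apply Hn. rewrite <- (sin_asin w) by lra. rewrite E, sin_0. reflexivity. Qed.
Lemma gneq_atan w : -1 < w < 1 -> w <> 0 -> atan w <> 0.
Proof. intros Hw Hn E. apply Hn. rewrite <- (tan_atan w). rewrite E, tan_0. reflexivity. Qed.
Lemma gneq_arcsinh w : -1 < w < 1 -> w <> 0 -> arcsinh w <> 0.
Proof. intros Hw Hn E. apply Hn. rewrite <- (sinh_arcsinh w). rewrite E. unfold sinh. rewrite Ropp_0, exp_0. field. Qed.

Lemma bound_atan : forall w, 0 < w < 1/2 ->
  Rabs (atan w - w * (1 + (-1/3) * w ^ 2 + (1/5) * w ^ 4 + (-1/7) * w ^ 6)) <= 1 * w ^ 9.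
Proof.
  apply (mvt_bound atan (fun t => t * (1 + (-1/3) * t ^ 2 + (1/5) * t ^ 4 + (-1/7) * t ^ 6))
     (fun t => / (1 + t ^ 2)) (fun t => 1 + 3 * (-1/3) * t ^ 2 + 5 * (1/5) * t ^ 4 + 7 * (-1/7) * t ^ 6)).
  - apply atan_0.
  - ring.
  - intros t _. apply derivable_pt_lim_atan.
  - intros t _. apply D_poly.
  - intros t Ht.
    assert (0 < 1 + t ^ 2) by (pose proof (pow2_ge_0 t); lra).
    replace (/ (1 + t ^ 2) - (1 + 3 * (-1/3) * t ^ 2 + 5 * (1/5) * t ^ 4 + 7 * (-1/7) * t ^ 6))
      with (t ^ 8 * / (1 + t ^ 2)) by (field; lra).
    rewrite Rabs_mult, Rabs_pos_eq by (apply pow_le; lra).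
    rewrite Rabs_pos_eq by (left; apply Rinv_0_lt_compat; lra).
    assert (/ (1 + t ^ 2) <= 1).
    { rewrite <- Rinv_1. apply Rinv_le_contravar; [lra|]. pose proof (pow2_ge_0 t); lra. }
    pose proof (pow_le t 8 ltac:(lra)). nra.
Qed.

Lemma bound_asin : forall w, 0 < w < 1/2 ->
  Rabs (asin w - w * (1 + (1/6) * w ^ 2 + (3/40) * w ^ 4 + (5/112) * w ^ 6)) <= 2 * w ^ 9.
Proof.
  apply (mvt_bound asin (fun t => t * (1 + (1/6) * t ^ 2 + (3/40) * t ^ 4 + (5/112) * t ^ 6))
     (fun t => 1 / sqrt (1 - t²)) (fun t => 1 + 3 * (1/6) * t ^ 2 + 5 * (3/40) * t ^ 4 + 7 * (5/112) * t ^ 6)).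
  - apply asin_0.
  - ring.
  - intros t Ht. assert (H : -1 < t < 1) by lra.
    apply (derive_pt_eq_1 _ _ _ (derivable_pt_asin t H)). apply derive_pt_asin.
  - intros t _. apply D_poly.
  - intros t Ht. unfold Rsqr.
    assert (Hs0 : 0 <= 1 - t * t) by nra.
    pose proof (sqrt_sqrt (1 - t * t) Hs0) as Hss.
    pose proof (sqrt_pos (1 - t * t)).
    remember (sqrt (1 - t * t)) as s.
    assert (Hs : 1/2 <= s) by nra.
    remember (1 + 3 * (1/6) * t ^ 2 + 5 * (3/40) * t ^ 4 + 7 * (5/112) * t ^ 6) as p eqn:Hp.
    assert (Hp1 : 1 <= p) by (rewrite Hp; pose proof (pow_le t 2 ltac:(lra)); pose proof (pow_le t 4 ltac:(lra)); pose proof (pow_le t 6 ltac:(lra)); lra).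
    set (r := 35/64 + 7/32 * t ^ 2 + 35/256 * t ^ 4 + 25/256 * t ^ 6).
    assert (Hr : 0 <= r <= 1).
    { unfold r. assert (t ^ 2 <= 1/4) by (simpl; nra). assert (0 <= t ^ 2) by (apply pow_le; lra).
      replace (t ^ 4) with (t ^ 2 * t ^ 2) by ring. replace (t ^ 6) with (t ^ 2 * t ^ 2 * t ^ 2) by ring.
      split; [|nra]. assert (0 <= t^2 * t^2) by nra. assert (0 <= t^2*t^2*t^2) by nra. lra. }
    assert (key : (1 / s - p) * (s * (1 + p * s)) = t ^ 8 * r).
    { replace ((1 / s - p) * (s * (1 + p * s))) with (1 - p * p * (s * s)) by (field; lra).
      rewrite Hss, Hp. unfold r. field. }
    clearbody r.
    assert (HD : 1/2 <= s * (1 + p * s)) by nra.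
    pose proof (pow_le t 8 ltac:(lra)).
    assert (Rabs (1 / s - p) * (s * (1 + p * s)) <= t ^ 8).
    { rewrite <- (Rabs_pos_eq (s * (1 + p * s))) by lra. rewrite <- Rabs_mult, key.
      rewrite Rabs_mult, !Rabs_pos_eq by lra. nra. }
    pose proof (Rabs_pos (1 / s - p)). nra.
Qed.

Lemma arcsinh_0 : arcsinh 0 = 0.
Proof. unfold arcsinh. replace (0 ^ 2 + 1) with 1 by ring. rewrite sqrt_1, Rplus_0_l. apply ln_1. Qed.

Lemma bound_arcsinh : forall w, 0 < w < 1/2 ->
  Rabs (arcsinh w - w * (1 + (-1/6) * w ^ 2 + (3/40) * w ^ 4 + (-5/112) * w ^ 6)) <= 1 * w ^ 9.
Proof.
  apply (mvt_bound arcsinh (fun t => t * (1 + (-1/6) * t ^ 2 + (3/40) * t ^ 4 + (-5/112) * t ^ 6))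
     (fun t => / sqrt (t ^ 2 + 1)) (fun t => 1 + 3 * (-1/6) * t ^ 2 + 5 * (3/40) * t ^ 4 + 7 * (-5/112) * t ^ 6)).
  - apply arcsinh_0.
  - ring.
  - intros t _. apply derivable_pt_lim_arcsinh.
  - intros t _. apply D_poly.
  - intros t Ht.
    assert (Hs0 : 0 <= t ^ 2 + 1) by (pose proof (pow2_ge_0 t); lra).
    pose proof (sqrt_sqrt (t ^ 2 + 1) Hs0) as Hss.
    pose proof (sqrt_pos (t ^ 2 + 1)).
    remember (sqrt (t ^ 2 + 1)) as s.
    assert (Hs : 1 <= s) by (pose proof (pow2_ge_0 t); nra).
    remember (1 + 3 * (-1/6) * t ^ 2 + 5 * (3/40) * t ^ 4 + 7 * (-5/112) * t ^ 6) as p eqn:Hp.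
    assert (Hp1 : 0 <= p).
    { rewrite Hp. assert (t ^ 2 <= 1/4) by (simpl; nra). assert (0 <= t ^ 2) by (apply pow_le; lra).
      replace (t ^ 4) with (t ^ 2 * t ^ 2) by ring. replace (t ^ 6) with (t ^ 2 * t ^ 2 * t ^ 2) by ring.
      assert (0 <= t^2 * t^2) by nra. assert (t^2*t^2*t^2 <= 1/64) by nra. lra. }
    set (r := 35/64 - 7/32 * t ^ 2 + 35/256 * t ^ 4 - 25/256 * t ^ 6).
    assert (Hr : Rabs r <= 1).
    { unfold r. assert (t ^ 2 <= 1/4) by (simpl; nra). assert (0 <= t ^ 2) by (apply pow_le; lra).
      replace (t ^ 4) with (t ^ 2 * t ^ 2) by ring. replace (t ^ 6) with (t ^ 2 * t ^ 2 * t ^ 2) by ring.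
      assert (0 <= t^2 * t^2) by nra. assert (0 <= t^2*t^2*t^2) by nra.
      assert (t^2*t^2 <= 1/16) by nra. assert (t^2*t^2*t^2 <= 1/64) by nra.
      apply Rabs_le; lra. }
    assert (key : (/ s - p) * (s * (1 + p * s)) = t ^ 8 * r).
    { replace ((/ s - p) * (s * (1 + p * s))) with (1 - p * p * (s * s)) by (field; lra).
      rewrite Hss, Hp. unfold r. field. }
    clearbody r.
    assert (HD : 1 <= s * (1 + p * s)) by nra.
    pose proof (pow_le t 8 ltac:(lra)).
    assert (Rabs (/ s - p) * (s * (1 + p * s)) <= t ^ 8).
    { rewrite <- (Rabs_pos_eq (s * (1 + p * s))) by lra. rewrite <- Rabs_mult, key.
      rewrite Rabs_mult, (Rabs_pos_eq (t ^ 8)) by lra. nra. }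
    pose proof (Rabs_pos (/ s - p)). nra.
Qed.

Definition chainC (k1 k2 k3 m1 m2 m3 n1 n2 n3 : R) : Prop :=
  n1 = ((1/4)*n1 + (1/2)*m1 + (1/4)*k1) /\ n2 = ((1/16)*n2 + (1/16)*n1 + (1/2)*m2 + (1/8)*m1*n1 + (1/4)*m1^2*n1 + (1/16)*k2 + (-3/16)*k1*n1 + (-1/8)*k1*m1 + (-1/2)*k1*m1*n1) /\ n3 = ((1/64)*n3 + (3/32)*n2 + (1/64)*n1 + (1/2)*m3 + (1/8)*m2*n1 + (9/32)*m1*n2 + (-1/32)*m1*n1 + (1/2)*m1*m2*n1 + (3/8)*m1^2*n2 + (-1/8)*m1^2*n1 + (-1/8)*m1^3*n1 + (1/64)*k3 + (-7/64)*k2*n1 + (-3/32)*k2*m1 + (-1/4)*k2*m1*n1 + (-7/64)*k1*n2 + (-3/64)*k1*n1 + (1/16)*k1*n1^2 + (-1/8)*k1*m2 + (-1/2)*k1*m2*n1 + (-1/4)*k1*m1*n2 + (3/32)*k1*m1*n1 + (1/4)*k1*m1*n1^2 + (1/16)*k1*m1^2 + (5/16)*k1*m1^2*n1 + (1/4)*k1*m1^2*n1^2).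

Lemma chain (fK fM fN : R -> R) (k1 k2 k3 m1 m2 m3 n1 n2 n3 : R) :
  expn_on (fun _ => True) fK k1 k2 k3 ->
  expn_on (fun w => 0 <= w) fM m1 m2 m3 ->
  expn_on (fun w => 0 <= w) fN n1 n2 n3 ->
  (forall z, 0 < z < 1 -> 1 - z <= fM z <= 1 + z) ->
  (exists d, 0 < d /\ forall z, 0 < z < d -> fN z = RHSf fK fM fN z) ->
  chainC k1 k2 k3 m1 m2 m3 n1 n2 n3.
Proof.
  intros HEfK HEfM HEfN HmM Hfe. unfold chainC.
  assert (H1 : ap (fun z => fM z) (peval [(1); 0; (m1); 0; (m2); 0; (m3)])).
  { apply expn_ap; exact HEfM. }
  assert (H2 : ap (fun z => 1) (peval [(1); 0; 0; 0; 0; 0; 0])).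
  { apply (ap_trans _ _ _ (ap_constL (1))); apply ap_trunc; coeqtac. }
  assert (H3 : ap (fun z => z) (peval [0; (1); 0; 0; 0; 0; 0])).
  { apply (ap_trans _ _ _ ap_idL); apply ap_trunc; coeqtac. }
  assert (H4 : ap (fun z => 1 - z) (peval [(1); ((-1)); 0; 0; 0; 0; 0])).
  { eapply ap_ext; [|eapply ap_subL; [exact H2|exact H3|coeqtac]]. exists 1; split; [lra|]; intros z Hz; cbv beta; try reflexivity; ring. }
  assert (H5 : ap (fun z => 1 + z) (peval [(1); (1); 0; 0; 0; 0; 0])).
  { eapply ap_ext; [|eapply ap_addL; [exact H2|exact H3|coeqtac]]. exists 1; split; [lra|]; intros z Hz; cbv beta; try reflexivity; ring. }
  assert (H6 : ap (fun z => fM z - (1 - z)) (peval [0; (1); (m1); 0; (m2); 0; (m3)])).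
  { eapply ap_ext; [|eapply ap_subL; [exact H1|exact H4|coeqtac]]. exists 1; split; [lra|]; intros z Hz; cbv beta; try reflexivity; ring. }
  assert (H7 : ap (fun z => (1 - z) + fM z) (peval [(2); ((-1)); (m1); 0; (m2); 0; (m3)])).
  { eapply ap_ext; [|eapply ap_addL; [exact H4|exact H1|coeqtac]]. exists 1; split; [lra|]; intros z Hz; cbv beta; try reflexivity; ring. }
  assert (H8 : ap (fun z => / ((1 - z) + fM z)) (peval [((1/2)); ((1/4)); ((1/8) + (-1/4)*m1); ((1/16) + (-1/4)*m1); ((1/32) + (-1/4)*m2 + (-3/16)*m1 + (1/8)*m1^2); ((1/64) + (-1/4)*m2 + (-1/8)*m1 + (3/16)*m1^2); ((1/128) + (-1/4)*m3 + (-3/16)*m2 + (-5/64)*m1 + (1/4)*m1*m2 + (3/16)*m1^2 + (-1/16)*m1^3)])).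
  { eapply ap_ext; [|eapply ap_invL; [exact H7| cbn; lra |coeqtac]]. exists 1; split; [lra|]; intros z Hz; cbv beta; try reflexivity; ring. }
  assert (H9 : ap (fun z => w1f fM z) (peval [0; ((1/2)); ((1/4) + (1/2)*m1); ((1/8)); ((1/16) + (1/2)*m2 + (-1/8)*m1 + (-1/4)*m1^2); ((1/32) + (-1/8)*m1 + (-1/8)*m1^2); ((1/64) + (1/2)*m3 + (-1/8)*m2 + (-3/32)*m1 + (-1/2)*m1*m2 + (1/8)*m1^3)])).
  { eapply ap_ext; [|eapply ap_mulL; [exact H6|exact H8|coeqtac]]. exists 1; split; [lra|]; intros z Hz; cbv beta; try reflexivity; ring. }
  assert (H10 : ap (fun z => (1 + z) - fM z) (peval [0; (1); ((-1)*m1); 0; ((-1)*m2); 0; ((-1)*m3)])).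
  { eapply ap_ext; [|eapply ap_subL; [exact H5|exact H1|coeqtac]]. exists 1; split; [lra|]; intros z Hz; cbv beta; try reflexivity; ring. }
  assert (H11 : ap (fun z => fM z + (1 + z)) (peval [(2); (1); (m1); 0; (m2); 0; (m3)])).
  { eapply ap_ext; [|eapply ap_addL; [exact H1|exact H5|coeqtac]]. exists 1; split; [lra|]; intros z Hz; cbv beta; try reflexivity; ring. }
  assert (H12 : ap (fun z => / (fM z + (1 + z))) (peval [((1/2)); ((-1/4)); ((1/8) + (-1/4)*m1); ((-1/16) + (1/4)*m1); ((1/32) + (-1/4)*m2 + (-3/16)*m1 + (1/8)*m1^2); ((-1/64) + (1/4)*m2 + (1/8)*m1 + (-3/16)*m1^2); ((1/128) + (-1/4)*m3 + (-3/16)*m2 + (-5/64)*m1 + (1/4)*m1*m2 + (3/16)*m1^2 + (-1/16)*m1^3)])).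
  { eapply ap_ext; [|eapply ap_invL; [exact H11| cbn; lra |coeqtac]]. exists 1; split; [lra|]; intros z Hz; cbv beta; try reflexivity; ring. }
  assert (H13 : ap (fun z => w2f fM z) (peval [0; ((1/2)); ((-1/4) + (-1/2)*m1); ((1/8)); ((-1/16) + (-1/2)*m2 + (1/8)*m1 + (1/4)*m1^2); ((1/32) + (-1/8)*m1 + (-1/8)*m1^2); ((-1/64) + (-1/2)*m3 + (1/8)*m2 + (3/32)*m1 + (1/2)*m1*m2 + (-1/8)*m1^3)])).
  { eapply ap_ext; [|eapply ap_mulL; [exact H10|exact H12|coeqtac]]. exists 1; split; [lra|]; intros z Hz; cbv beta; try reflexivity; ring. }
  assert (H14 : ap (fun z => (w1f fM z) * (w1f fM z)) (peval [0; 0; ((1/4)); ((1/4) + (1/2)*m1); ((3/16) + (1/4)*m1 + (1/4)*m1^2); ((1/8) + (1/2)*m2 + (-1/4)*m1^2); ((5/64) + (1/4)*m2 + (-1/8)*m1 + (1/2)*m1*m2 + (-3/8)*m1^2 + (-1/4)*m1^3)])).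
  { eapply ap_ext; [|eapply ap_mulL; [exact H9|exact H9|coeqtac]]. exists 1; split; [lra|]; intros z Hz; cbv beta; try reflexivity; ring. }
  assert (H15 : ap (fun z => n3) (peval [(n3); 0; 0; 0; 0; 0; 0])).
  { apply (ap_trans _ _ _ (ap_constL (n3))); apply ap_trunc; coeqtac. }
  assert (H16 : ap (fun z => (n3) * ((w1f fM z) * (w1f fM z))) (peval [0; 0; ((1/4)*n3); ((1/4)*n3 + (1/2)*m1*n3); ((3/16)*n3 + (1/4)*m1*n3 + (1/4)*m1^2*n3); ((1/8)*n3 + (1/2)*m2*n3 + (-1/4)*m1^2*n3); ((5/64)*n3 + (1/4)*m2*n3 + (-1/8)*m1*n3 + (1/2)*m1*m2*n3 + (-3/8)*m1^2*n3 + (-1/4)*m1^3*n3)])).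
  { eapply ap_ext; [|eapply ap_mulL; [exact H15|exact H14|coeqtac]]. exists 1; split; [lra|]; intros z Hz; cbv beta; try reflexivity; ring. }
  assert (H17 : ap (fun z => n2) (peval [(n2); 0; 0; 0; 0; 0; 0])).
  { apply (ap_trans _ _ _ (ap_constL (n2))); apply ap_trunc; coeqtac. }
  assert (H18 : ap (fun z => (n2) + ((n3) * ((w1f fM z) * (w1f fM z)))) (peval [(n2); 0; ((1/4)*n3); ((1/4)*n3 + (1/2)*m1*n3); ((3/16)*n3 + (1/4)*m1*n3 + (1/4)*m1^2*n3); ((1/8)*n3 + (1/2)*m2*n3 + (-1/4)*m1^2*n3); ((5/64)*n3 + (1/4)*m2*n3 + (-1/8)*m1*n3 + (1/2)*m1*m2*n3 + (-3/8)*m1^2*n3 + (-1/4)*m1^3*n3)])).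
  { eapply ap_ext; [|eapply ap_addL; [exact H17|exact H16|coeqtac]]. exists 1; split; [lra|]; intros z Hz; cbv beta; try reflexivity; ring. }
  assert (H19 : ap (fun z => ((w1f fM z) * (w1f fM z)) * ((n2) + ((n3) * ((w1f fM z) * (w1f fM z))))) (peval [0; 0; ((1/4)*n2); ((1/4)*n2 + (1/2)*m1*n2); ((1/16)*n3 + (3/16)*n2 + (1/4)*m1*n2 + (1/4)*m1^2*n2); ((1/8)*n3 + (1/8)*n2 + (1/2)*m2*n2 + (1/4)*m1*n3 + (-1/4)*m1^2*n2); ((5/32)*n3 + (5/64)*n2 + (1/4)*m2*n2 + (3/8)*m1*n3 + (-1/8)*m1*n2 + (1/2)*m1*m2*n2 + (3/8)*m1^2*n3 + (-3/8)*m1^2*n2 + (-1/4)*m1^3*n2)])).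
  { eapply ap_ext; [|eapply ap_mulL; [exact H14|exact H18|coeqtac]]. exists 1; split; [lra|]; intros z Hz; cbv beta; try reflexivity; ring. }
  assert (H20 : ap (fun z => n1) (peval [(n1); 0; 0; 0; 0; 0; 0])).
  { apply (ap_trans _ _ _ (ap_constL (n1))); apply ap_trunc; coeqtac. }
  assert (H21 : ap (fun z => (n1) + (((w1f fM z) * (w1f fM z)) * ((n2) + ((n3) * ((w1f fM z) * (w1f fM z)))))) (peval [(n1); 0; ((1/4)*n2); ((1/4)*n2 + (1/2)*m1*n2); ((1/16)*n3 + (3/16)*n2 + (1/4)*m1*n2 + (1/4)*m1^2*n2); ((1/8)*n3 + (1/8)*n2 + (1/2)*m2*n2 + (1/4)*m1*n3 + (-1/4)*m1^2*n2); ((5/32)*n3 + (5/64)*n2 + (1/4)*m2*n2 + (3/8)*m1*n3 + (-1/8)*m1*n2 + (1/2)*m1*m2*n2 + (3/8)*m1^2*n3 + (-3/8)*m1^2*n2 + (-1/4)*m1^3*n2)])).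
  { eapply ap_ext; [|eapply ap_addL; [exact H20|exact H19|coeqtac]]. exists 1; split; [lra|]; intros z Hz; cbv beta; try reflexivity; ring. }
  assert (H22 : ap (fun z => ((w1f fM z) * (w1f fM z)) * ((n1) + (((w1f fM z) * (w1f fM z)) * ((n2) + ((n3) * ((w1f fM z) * (w1f fM z))))))) (peval [0; 0; ((1/4)*n1); ((1/4)*n1 + (1/2)*m1*n1); ((1/16)*n2 + (3/16)*n1 + (1/4)*m1*n1 + (1/4)*m1^2*n1); ((1/8)*n2 + (1/8)*n1 + (1/2)*m2*n1 + (1/4)*m1*n2 + (-1/4)*m1^2*n1); ((1/64)*n3 + (5/32)*n2 + (5/64)*n1 + (1/4)*m2*n1 + (3/8)*m1*n2 + (-1/8)*m1*n1 + (1/2)*m1*m2*n1 + (3/8)*m1^2*n2 + (-3/8)*m1^2*n1 + (-1/4)*m1^3*n1)])).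
  { eapply ap_ext; [|eapply ap_mulL; [exact H14|exact H21|coeqtac]]. exists 1; split; [lra|]; intros z Hz; cbv beta; try reflexivity; ring. }
  assert (H23 : ap (fun z => 1) (peval [(1); 0; 0; 0; 0; 0; 0])).
  { apply (ap_trans _ _ _ (ap_constL (1))); apply ap_trunc; coeqtac. }
  assert (H24 : ap (fun z => (1) + (((w1f fM z) * (w1f fM z)) * ((n1) + (((w1f fM z) * (w1f fM z)) * ((n2) + ((n3) * ((w1f fM z) * (w1f fM z)))))))) (peval [(1); 0; ((1/4)*n1); ((1/4)*n1 + (1/2)*m1*n1); ((1/16)*n2 + (3/16)*n1 + (1/4)*m1*n1 + (1/4)*m1^2*n1); ((1/8)*n2 + (1/8)*n1 + (1/2)*m2*n1 + (1/4)*m1*n2 + (-1/4)*m1^2*n1); ((1/64)*n3 + (5/32)*n2 + (5/64)*n1 + (1/4)*m2*n1 + (3/8)*m1*n2 + (-1/8)*m1*n1 + (1/2)*m1*m2*n1 + (3/8)*m1^2*n2 + (-3/8)*m1^2*n1 + (-1/4)*m1^3*n1)])).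
  { eapply ap_ext; [|eapply ap_addL; [exact H23|exact H22|coeqtac]]. exists 1; split; [lra|]; intros z Hz; cbv beta; try reflexivity; ring. }
  assert (H25 : ap (fun z => fN (w1f fM z)) (peval [(1); 0; ((1/4)*n1); ((1/4)*n1 + (1/2)*m1*n1); ((1/16)*n2 + (3/16)*n1 + (1/4)*m1*n1 + (1/4)*m1^2*n1); ((1/8)*n2 + (1/8)*n1 + (1/2)*m2*n1 + (1/4)*m1*n2 + (-1/4)*m1^2*n1); ((1/64)*n3 + (5/32)*n2 + (5/64)*n1 + (1/4)*m2*n1 + (3/8)*m1*n2 + (-1/8)*m1*n1 + (1/2)*m1*m2*n1 + (3/8)*m1^2*n2 + (-3/8)*m1^2*n1 + (-1/4)*m1^3*n1)])).
  { eapply ap_trans; [eapply (ap_comp ((fun w => 0 <= w)) fN n1 n2 n3 (fun z => w1f fM z) [0; ((1/2)); ((1/4) + (1/2)*m1); ((1/8)); ((1/16) + (1/2)*m2 + (-1/8)*m1 + (-1/4)*m1^2); ((1/32) + (-1/8)*m1 + (-1/8)*m1^2); ((1/64) + (1/2)*m3 + (-1/8)*m2 + (-3/32)*m1 + (-1/2)*m1*m2 + (1/8)*m1^3)]); [exact HEfN|exact H9|cbn; reflexivity|apply w1_nonneg; exact HmM]|].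
    eapply ap_ext; [|exact H24]. exists 1; split; [lra|]; intros z Hz; cbv beta; try reflexivity; ring. }
  assert (H26 : ap (fun z => (w2f fM z) * (w2f fM z)) (peval [0; 0; ((1/4)); ((-1/4) + (-1/2)*m1); ((3/16) + (1/4)*m1 + (1/4)*m1^2); ((-1/8) + (-1/2)*m2 + (1/4)*m1^2); ((5/64) + (1/4)*m2 + (-1/8)*m1 + (1/2)*m1*m2 + (-3/8)*m1^2 + (-1/4)*m1^3)])).
  { eapply ap_ext; [|eapply ap_mulL; [exact H13|exact H13|coeqtac]]. exists 1; split; [lra|]; intros z Hz; cbv beta; try reflexivity; ring. }
  assert (H27 : ap (fun z => n3) (peval [(n3); 0; 0; 0; 0; 0; 0])).
  { apply (ap_trans _ _ _ (ap_constL (n3))); apply ap_trunc; coeqtac. }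
  assert (H28 : ap (fun z => (n3) * ((w2f fM z) * (w2f fM z))) (peval [0; 0; ((1/4)*n3); ((-1/4)*n3 + (-1/2)*m1*n3); ((3/16)*n3 + (1/4)*m1*n3 + (1/4)*m1^2*n3); ((-1/8)*n3 + (-1/2)*m2*n3 + (1/4)*m1^2*n3); ((5/64)*n3 + (1/4)*m2*n3 + (-1/8)*m1*n3 + (1/2)*m1*m2*n3 + (-3/8)*m1^2*n3 + (-1/4)*m1^3*n3)])).
  { eapply ap_ext; [|eapply ap_mulL; [exact H27|exact H26|coeqtac]]. exists 1; split; [lra|]; intros z Hz; cbv beta; try reflexivity; ring. }
  assert (H29 : ap (fun z => n2) (peval [(n2); 0; 0; 0; 0; 0; 0])).
  { apply (ap_trans _ _ _ (ap_constL (n2))); apply ap_trunc; coeqtac. }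
  assert (H30 : ap (fun z => (n2) + ((n3) * ((w2f fM z) * (w2f fM z)))) (peval [(n2); 0; ((1/4)*n3); ((-1/4)*n3 + (-1/2)*m1*n3); ((3/16)*n3 + (1/4)*m1*n3 + (1/4)*m1^2*n3); ((-1/8)*n3 + (-1/2)*m2*n3 + (1/4)*m1^2*n3); ((5/64)*n3 + (1/4)*m2*n3 + (-1/8)*m1*n3 + (1/2)*m1*m2*n3 + (-3/8)*m1^2*n3 + (-1/4)*m1^3*n3)])).
  { eapply ap_ext; [|eapply ap_addL; [exact H29|exact H28|coeqtac]]. exists 1; split; [lra|]; intros z Hz; cbv beta; try reflexivity; ring. }
  assert (H31 : ap (fun z => ((w2f fM z) * (w2f fM z)) * ((n2) + ((n3) * ((w2f fM z) * (w2f fM z))))) (peval [0; 0; ((1/4)*n2); ((-1/4)*n2 + (-1/2)*m1*n2); ((1/16)*n3 + (3/16)*n2 + (1/4)*m1*n2 + (1/4)*m1^2*n2); ((-1/8)*n3 + (-1/8)*n2 + (-1/2)*m2*n2 + (-1/4)*m1*n3 + (1/4)*m1^2*n2); ((5/32)*n3 + (5/64)*n2 + (1/4)*m2*n2 + (3/8)*m1*n3 + (-1/8)*m1*n2 + (1/2)*m1*m2*n2 + (3/8)*m1^2*n3 + (-3/8)*m1^2*n2 + (-1/4)*m1^3*n2)])).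
  { eapply ap_ext; [|eapply ap_mulL; [exact H26|exact H30|coeqtac]]. exists 1; split; [lra|]; intros z Hz; cbv beta; try reflexivity; ring. }
  assert (H32 : ap (fun z => n1) (peval [(n1); 0; 0; 0; 0; 0; 0])).
  { apply (ap_trans _ _ _ (ap_constL (n1))); apply ap_trunc; coeqtac. }
  assert (H33 : ap (fun z => (n1) + (((w2f fM z) * (w2f fM z)) * ((n2) + ((n3) * ((w2f fM z) * (w2f fM z)))))) (peval [(n1); 0; ((1/4)*n2); ((-1/4)*n2 + (-1/2)*m1*n2); ((1/16)*n3 + (3/16)*n2 + (1/4)*m1*n2 + (1/4)*m1^2*n2); ((-1/8)*n3 + (-1/8)*n2 + (-1/2)*m2*n2 + (-1/4)*m1*n3 + (1/4)*m1^2*n2); ((5/32)*n3 + (5/64)*n2 + (1/4)*m2*n2 + (3/8)*m1*n3 + (-1/8)*m1*n2 + (1/2)*m1*m2*n2 + (3/8)*m1^2*n3 + (-3/8)*m1^2*n2 + (-1/4)*m1^3*n2)])).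
  { eapply ap_ext; [|eapply ap_addL; [exact H32|exact H31|coeqtac]]. exists 1; split; [lra|]; intros z Hz; cbv beta; try reflexivity; ring. }
  assert (H34 : ap (fun z => ((w2f fM z) * (w2f fM z)) * ((n1) + (((w2f fM z) * (w2f fM z)) * ((n2) + ((n3) * ((w2f fM z) * (w2f fM z))))))) (peval [0; 0; ((1/4)*n1); ((-1/4)*n1 + (-1/2)*m1*n1); ((1/16)*n2 + (3/16)*n1 + (1/4)*m1*n1 + (1/4)*m1^2*n1); ((-1/8)*n2 + (-1/8)*n1 + (-1/2)*m2*n1 + (-1/4)*m1*n2 + (1/4)*m1^2*n1); ((1/64)*n3 + (5/32)*n2 + (5/64)*n1 + (1/4)*m2*n1 + (3/8)*m1*n2 + (-1/8)*m1*n1 + (1/2)*m1*m2*n1 + (3/8)*m1^2*n2 + (-3/8)*m1^2*n1 + (-1/4)*m1^3*n1)])).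
  { eapply ap_ext; [|eapply ap_mulL; [exact H26|exact H33|coeqtac]]. exists 1; split; [lra|]; intros z Hz; cbv beta; try reflexivity; ring. }
  assert (H35 : ap (fun z => 1) (peval [(1); 0; 0; 0; 0; 0; 0])).
  { apply (ap_trans _ _ _ (ap_constL (1))); apply ap_trunc; coeqtac. }
  assert (H36 : ap (fun z => (1) + (((w2f fM z) * (w2f fM z)) * ((n1) + (((w2f fM z) * (w2f fM z)) * ((n2) + ((n3) * ((w2f fM z) * (w2f fM z)))))))) (peval [(1); 0; ((1/4)*n1); ((-1/4)*n1 + (-1/2)*m1*n1); ((1/16)*n2 + (3/16)*n1 + (1/4)*m1*n1 + (1/4)*m1^2*n1); ((-1/8)*n2 + (-1/8)*n1 + (-1/2)*m2*n1 + (-1/4)*m1*n2 + (1/4)*m1^2*n1); ((1/64)*n3 + (5/32)*n2 + (5/64)*n1 + (1/4)*m2*n1 + (3/8)*m1*n2 + (-1/8)*m1*n1 + (1/2)*m1*m2*n1 + (3/8)*m1^2*n2 + (-3/8)*m1^2*n1 + (-1/4)*m1^3*n1)])).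
  { eapply ap_ext; [|eapply ap_addL; [exact H35|exact H34|coeqtac]]. exists 1; split; [lra|]; intros z Hz; cbv beta; try reflexivity; ring. }
  assert (H37 : ap (fun z => fN (w2f fM z)) (peval [(1); 0; ((1/4)*n1); ((-1/4)*n1 + (-1/2)*m1*n1); ((1/16)*n2 + (3/16)*n1 + (1/4)*m1*n1 + (1/4)*m1^2*n1); ((-1/8)*n2 + (-1/8)*n1 + (-1/2)*m2*n1 + (-1/4)*m1*n2 + (1/4)*m1^2*n1); ((1/64)*n3 + (5/32)*n2 + (5/64)*n1 + (1/4)*m2*n1 + (3/8)*m1*n2 + (-1/8)*m1*n1 + (1/2)*m1*m2*n1 + (3/8)*m1^2*n2 + (-3/8)*m1^2*n1 + (-1/4)*m1^3*n1)])).
  { eapply ap_trans; [eapply (ap_comp ((fun w => 0 <= w)) fN n1 n2 n3 (fun z => w2f fM z) [0; ((1/2)); ((-1/4) + (-1/2)*m1); ((1/8)); ((-1/16) + (-1/2)*m2 + (1/8)*m1 + (1/4)*m1^2); ((1/32) + (-1/8)*m1 + (-1/8)*m1^2); ((-1/64) + (-1/2)*m3 + (1/8)*m2 + (3/32)*m1 + (1/2)*m1*m2 + (-1/8)*m1^3)]); [exact HEfN|exact H13|cbn; reflexivity|apply w2_nonneg; exact HmM]|].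
    eapply ap_ext; [|exact H36]. exists 1; split; [lra|]; intros z Hz; cbv beta; try reflexivity; ring. }
  assert (H38 : ap (fun z => / 2) (peval [((1/2)); 0; 0; 0; 0; 0; 0])).
  { apply (ap_trans _ _ _ (ap_constL (/ 2))); apply ap_trunc; coeqtac. }
  assert (H39 : ap (fun z => ((1 - z) + fM z) / 2) (peval [(1); ((-1/2)); ((1/2)*m1); 0; ((1/2)*m2); 0; ((1/2)*m3)])).
  { eapply ap_ext; [|eapply ap_mulL; [exact H7|exact H38|coeqtac]]. exists 1; split; [lra|]; intros z Hz; cbv beta; try reflexivity; ring. }
  assert (H40 : ap (fun z => Af fM fN z) (peval [(1); ((-1/2)); ((1/4)*n1 + (1/2)*m1); ((1/8)*n1 + (1/2)*m1*n1); ((1/16)*n2 + (1/16)*n1 + (1/2)*m2 + (1/8)*m1*n1 + (1/4)*m1^2*n1); ((3/32)*n2 + (1/32)*n1 + (1/2)*m2*n1 + (1/4)*m1*n2 + (-1/8)*m1^2*n1); ((1/64)*n3 + (3/32)*n2 + (1/64)*n1 + (1/2)*m3 + (1/8)*m2*n1 + (9/32)*m1*n2 + (-1/32)*m1*n1 + (1/2)*m1*m2*n1 + (3/8)*m1^2*n2 + (-1/8)*m1^2*n1 + (-1/8)*m1^3*n1)])).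
  { eapply ap_ext; [|eapply ap_mulL; [exact H39|exact H25|coeqtac]]. exists 1; split; [lra|]; intros z Hz; cbv beta; try reflexivity; ring. }
  assert (H41 : ap (fun z => (fM z + (1 + z)) / 2) (peval [(1); ((1/2)); ((1/2)*m1); 0; ((1/2)*m2); 0; ((1/2)*m3)])).
  { eapply ap_ext; [|eapply ap_mulL; [exact H11|exact H38|coeqtac]]. exists 1; split; [lra|]; intros z Hz; cbv beta; try reflexivity; ring. }
  assert (H42 : ap (fun z => Bf fM fN z) (peval [(1); ((1/2)); ((1/4)*n1 + (1/2)*m1); ((-1/8)*n1 + (-1/2)*m1*n1); ((1/16)*n2 + (1/16)*n1 + (1/2)*m2 + (1/8)*m1*n1 + (1/4)*m1^2*n1); ((-3/32)*n2 + (-1/32)*n1 + (-1/2)*m2*n1 + (-1/4)*m1*n2 + (1/8)*m1^2*n1); ((1/64)*n3 + (3/32)*n2 + (1/64)*n1 + (1/2)*m3 + (1/8)*m2*n1 + (9/32)*m1*n2 + (-1/32)*m1*n1 + (1/2)*m1*m2*n1 + (3/8)*m1^2*n2 + (-1/8)*m1^2*n1 + (-1/8)*m1^3*n1)])).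
  { eapply ap_ext; [|eapply ap_mulL; [exact H41|exact H37|coeqtac]]. exists 1; split; [lra|]; intros z Hz; cbv beta; try reflexivity; ring. }
  assert (H43 : ap (fun z => Af fM fN z + Bf fM fN z) (peval [(2); 0; ((1/2)*n1 + m1); 0; ((1/8)*n2 + (1/8)*n1 + m2 + (1/4)*m1*n1 + (1/2)*m1^2*n1); 0; ((1/32)*n3 + (3/16)*n2 + (1/32)*n1 + m3 + (1/4)*m2*n1 + (9/16)*m1*n2 + (-1/16)*m1*n1 + m1*m2*n1 + (3/4)*m1^2*n2 + (-1/4)*m1^2*n1 + (-1/4)*m1^3*n1)])).
  { eapply ap_ext; [|eapply ap_addL; [exact H40|exact H42|coeqtac]]. exists 1; split; [lra|]; intros z Hz; cbv beta; try reflexivity; ring. }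
  assert (H44 : ap (fun z => Bf fM fN z - Af fM fN z) (peval [0; (1); 0; ((-1/4)*n1 + (-1)*m1*n1); 0; ((-3/16)*n2 + (-1/16)*n1 + (-1)*m2*n1 + (-1/2)*m1*n2 + (1/4)*m1^2*n1); 0])).
  { eapply ap_ext; [|eapply ap_subL; [exact H42|exact H40|coeqtac]]. exists 1; split; [lra|]; intros z Hz; cbv beta; try reflexivity; ring. }
  assert (H45 : ap (fun z => / (Af fM fN z + Bf fM fN z)) (peval [((1/2)); 0; ((-1/8)*n1 + (-1/4)*m1); 0; ((-1/32)*n2 + (-1/32)*n1 + (1/32)*n1^2 + (-1/4)*m2 + (1/16)*m1*n1 + (1/8)*m1^2 + (-1/8)*m1^2*n1); 0; ((-1/128)*n3 + (-3/64)*n2 + (-1/128)*n1 + (1/64)*n1*n2 + (1/64)*n1^2 + (-1/128)*n1^3 + (-1/4)*m3 + (1/16)*m2*n1 + (-7/64)*m1*n2 + (3/64)*m1*n1 + (-1/64)*m1*n1^2 + (1/4)*m1*m2 + (-1/4)*m1*m2*n1 + (-3/16)*m1^2*n2 + (1/32)*m1^2*n1 + (1/16)*m1^2*n1^2 + (-1/16)*m1^3 + (3/16)*m1^3*n1)])).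
  { eapply ap_ext; [|eapply ap_invL; [exact H43| cbn; lra |coeqtac]]. exists 1; split; [lra|]; intros z Hz; cbv beta; try reflexivity; ring. }
  assert (H46 : ap (fun z => rf fM fN z) (peval [0; ((1/2)); 0; ((-1/4)*n1 + (-1/4)*m1 + (-1/2)*m1*n1); 0; ((-1/8)*n2 + (-1/16)*n1 + (1/16)*n1^2 + (-1/4)*m2 + (-1/2)*m2*n1 + (-1/4)*m1*n2 + (1/8)*m1*n1 + (1/8)*m1*n1^2 + (1/8)*m1^2 + (1/4)*m1^2*n1); 0])).
  { eapply ap_ext; [|eapply ap_mulL; [exact H44|exact H45|coeqtac]]. exists 1; split; [lra|]; intros z Hz; cbv beta; try reflexivity; ring. }
  assert (H47 : ap (fun z => (rf fM fN z) * (rf fM fN z)) (peval [0; 0; ((1/4)); 0; ((-1/4)*n1 + (-1/4)*m1 + (-1/2)*m1*n1); 0; ((-1/8)*n2 + (-1/16)*n1 + (1/8)*n1^2 + (-1/4)*m2 + (-1/2)*m2*n1 + (-1/4)*m1*n2 + (1/4)*m1*n1 + (3/8)*m1*n1^2 + (3/16)*m1^2 + (1/2)*m1^2*n1 + (1/4)*m1^2*n1^2)])).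
  { eapply ap_ext; [|eapply ap_mulL; [exact H46|exact H46|coeqtac]]. exists 1; split; [lra|]; intros z Hz; cbv beta; try reflexivity; ring. }
  assert (H48 : ap (fun z => k3) (peval [(k3); 0; 0; 0; 0; 0; 0])).
  { apply (ap_trans _ _ _ (ap_constL (k3))); apply ap_trunc; coeqtac. }
  assert (H49 : ap (fun z => (k3) * ((rf fM fN z) * (rf fM fN z))) (peval [0; 0; ((1/4)*k3); 0; ((-1/4)*k3*n1 + (-1/4)*k3*m1 + (-1/2)*k3*m1*n1); 0; ((-1/8)*k3*n2 + (-1/16)*k3*n1 + (1/8)*k3*n1^2 + (-1/4)*k3*m2 + (-1/2)*k3*m2*n1 + (-1/4)*k3*m1*n2 + (1/4)*k3*m1*n1 + (3/8)*k3*m1*n1^2 + (3/16)*k3*m1^2 + (1/2)*k3*m1^2*n1 + (1/4)*k3*m1^2*n1^2)])).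
  { eapply ap_ext; [|eapply ap_mulL; [exact H48|exact H47|coeqtac]]. exists 1; split; [lra|]; intros z Hz; cbv beta; try reflexivity; ring. }
  assert (H50 : ap (fun z => k2) (peval [(k2); 0; 0; 0; 0; 0; 0])).
  { apply (ap_trans _ _ _ (ap_constL (k2))); apply ap_trunc; coeqtac. }
  assert (H51 : ap (fun z => (k2) + ((k3) * ((rf fM fN z) * (rf fM fN z)))) (peval [(k2); 0; ((1/4)*k3); 0; ((-1/4)*k3*n1 + (-1/4)*k3*m1 + (-1/2)*k3*m1*n1); 0; ((-1/8)*k3*n2 + (-1/16)*k3*n1 + (1/8)*k3*n1^2 + (-1/4)*k3*m2 + (-1/2)*k3*m2*n1 + (-1/4)*k3*m1*n2 + (1/4)*k3*m1*n1 + (3/8)*k3*m1*n1^2 + (3/16)*k3*m1^2 + (1/2)*k3*m1^2*n1 + (1/4)*k3*m1^2*n1^2)])).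
  { eapply ap_ext; [|eapply ap_addL; [exact H50|exact H49|coeqtac]]. exists 1; split; [lra|]; intros z Hz; cbv beta; try reflexivity; ring. }
  assert (H52 : ap (fun z => ((rf fM fN z) * (rf fM fN z)) * ((k2) + ((k3) * ((rf fM fN z) * (rf fM fN z))))) (peval [0; 0; ((1/4)*k2); 0; ((1/16)*k3 + (-1/4)*k2*n1 + (-1/4)*k2*m1 + (-1/2)*k2*m1*n1); 0; ((-1/8)*k3*n1 + (-1/8)*k3*m1 + (-1/4)*k3*m1*n1 + (-1/8)*k2*n2 + (-1/16)*k2*n1 + (1/8)*k2*n1^2 + (-1/4)*k2*m2 + (-1/2)*k2*m2*n1 + (-1/4)*k2*m1*n2 + (1/4)*k2*m1*n1 + (3/8)*k2*m1*n1^2 + (3/16)*k2*m1^2 + (1/2)*k2*m1^2*n1 + (1/4)*k2*m1^2*n1^2)])).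
  { eapply ap_ext; [|eapply ap_mulL; [exact H47|exact H51|coeqtac]]. exists 1; split; [lra|]; intros z Hz; cbv beta; try reflexivity; ring. }
  assert (H53 : ap (fun z => k1) (peval [(k1); 0; 0; 0; 0; 0; 0])).
  { apply (ap_trans _ _ _ (ap_constL (k1))); apply ap_trunc; coeqtac. }
  assert (H54 : ap (fun z => (k1) + (((rf fM fN z) * (rf fM fN z)) * ((k2) + ((k3) * ((rf fM fN z) * (rf fM fN z)))))) (peval [(k1); 0; ((1/4)*k2); 0; ((1/16)*k3 + (-1/4)*k2*n1 + (-1/4)*k2*m1 + (-1/2)*k2*m1*n1); 0; ((-1/8)*k3*n1 + (-1/8)*k3*m1 + (-1/4)*k3*m1*n1 + (-1/8)*k2*n2 + (-1/16)*k2*n1 + (1/8)*k2*n1^2 + (-1/4)*k2*m2 + (-1/2)*k2*m2*n1 + (-1/4)*k2*m1*n2 + (1/4)*k2*m1*n1 + (3/8)*k2*m1*n1^2 + (3/16)*k2*m1^2 + (1/2)*k2*m1^2*n1 + (1/4)*k2*m1^2*n1^2)])).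
  { eapply ap_ext; [|eapply ap_addL; [exact H53|exact H52|coeqtac]]. exists 1; split; [lra|]; intros z Hz; cbv beta; try reflexivity; ring. }
  assert (H55 : ap (fun z => ((rf fM fN z) * (rf fM fN z)) * ((k1) + (((rf fM fN z) * (rf fM fN z)) * ((k2) + ((k3) * ((rf fM fN z) * (rf fM fN z))))))) (peval [0; 0; ((1/4)*k1); 0; ((1/16)*k2 + (-1/4)*k1*n1 + (-1/4)*k1*m1 + (-1/2)*k1*m1*n1); 0; ((1/64)*k3 + (-1/8)*k2*n1 + (-1/8)*k2*m1 + (-1/4)*k2*m1*n1 + (-1/8)*k1*n2 + (-1/16)*k1*n1 + (1/8)*k1*n1^2 + (-1/4)*k1*m2 + (-1/2)*k1*m2*n1 + (-1/4)*k1*m1*n2 + (1/4)*k1*m1*n1 + (3/8)*k1*m1*n1^2 + (3/16)*k1*m1^2 + (1/2)*k1*m1^2*n1 + (1/4)*k1*m1^2*n1^2)])).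
  { eapply ap_ext; [|eapply ap_mulL; [exact H47|exact H54|coeqtac]]. exists 1; split; [lra|]; intros z Hz; cbv beta; try reflexivity; ring. }
  assert (H56 : ap (fun z => 1) (peval [(1); 0; 0; 0; 0; 0; 0])).
  { apply (ap_trans _ _ _ (ap_constL (1))); apply ap_trunc; coeqtac. }
  assert (H57 : ap (fun z => (1) + (((rf fM fN z) * (rf fM fN z)) * ((k1) + (((rf fM fN z) * (rf fM fN z)) * ((k2) + ((k3) * ((rf fM fN z) * (rf fM fN z)))))))) (peval [(1); 0; ((1/4)*k1); 0; ((1/16)*k2 + (-1/4)*k1*n1 + (-1/4)*k1*m1 + (-1/2)*k1*m1*n1); 0; ((1/64)*k3 + (-1/8)*k2*n1 + (-1/8)*k2*m1 + (-1/4)*k2*m1*n1 + (-1/8)*k1*n2 + (-1/16)*k1*n1 + (1/8)*k1*n1^2 + (-1/4)*k1*m2 + (-1/2)*k1*m2*n1 + (-1/4)*k1*m1*n2 + (1/4)*k1*m1*n1 + (3/8)*k1*m1*n1^2 + (3/16)*k1*m1^2 + (1/2)*k1*m1^2*n1 + (1/4)*k1*m1^2*n1^2)])).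
  { eapply ap_ext; [|eapply ap_addL; [exact H56|exact H55|coeqtac]]. exists 1; split; [lra|]; intros z Hz; cbv beta; try reflexivity; ring. }
  assert (H58 : ap (fun z => fK (rf fM fN z)) (peval [(1); 0; ((1/4)*k1); 0; ((1/16)*k2 + (-1/4)*k1*n1 + (-1/4)*k1*m1 + (-1/2)*k1*m1*n1); 0; ((1/64)*k3 + (-1/8)*k2*n1 + (-1/8)*k2*m1 + (-1/4)*k2*m1*n1 + (-1/8)*k1*n2 + (-1/16)*k1*n1 + (1/8)*k1*n1^2 + (-1/4)*k1*m2 + (-1/2)*k1*m2*n1 + (-1/4)*k1*m1*n2 + (1/4)*k1*m1*n1 + (3/8)*k1*m1*n1^2 + (3/16)*k1*m1^2 + (1/2)*k1*m1^2*n1 + (1/4)*k1*m1^2*n1^2)])).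
  { eapply ap_trans; [eapply (ap_comp ((fun _ => True)) fK k1 k2 k3 (fun z => rf fM fN z) [0; ((1/2)); 0; ((-1/4)*n1 + (-1/4)*m1 + (-1/2)*m1*n1); 0; ((-1/8)*n2 + (-1/16)*n1 + (1/16)*n1^2 + (-1/4)*m2 + (-1/2)*m2*n1 + (-1/4)*m1*n2 + (1/8)*m1*n1 + (1/8)*m1*n1^2 + (1/8)*m1^2 + (1/4)*m1^2*n1); 0]); [exact HEfK|exact H46|cbn; reflexivity|exists 1; split; [lra|]; intros; exact I]|].
    eapply ap_ext; [|exact H57]. exists 1; split; [lra|]; intros z Hz; cbv beta; try reflexivity; ring. }
  assert (H59 : ap (fun z => (Af fM fN z + Bf fM fN z) / 2) (peval [(1); 0; ((1/4)*n1 + (1/2)*m1); 0; ((1/16)*n2 + (1/16)*n1 + (1/2)*m2 + (1/8)*m1*n1 + (1/4)*m1^2*n1); 0; ((1/64)*n3 + (3/32)*n2 + (1/64)*n1 + (1/2)*m3 + (1/8)*m2*n1 + (9/32)*m1*n2 + (-1/32)*m1*n1 + (1/2)*m1*m2*n1 + (3/8)*m1^2*n2 + (-1/8)*m1^2*n1 + (-1/8)*m1^3*n1)])).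
  { eapply ap_ext; [|eapply ap_mulL; [exact H43|exact H38|coeqtac]]. exists 1; split; [lra|]; intros z Hz; cbv beta; try reflexivity; ring. }
  assert (H60 : ap (fun z => RHSf fK fM fN z) (peval [(1); 0; ((1/4)*n1 + (1/2)*m1 + (1/4)*k1); 0; ((1/16)*n2 + (1/16)*n1 + (1/2)*m2 + (1/8)*m1*n1 + (1/4)*m1^2*n1 + (1/16)*k2 + (-3/16)*k1*n1 + (-1/8)*k1*m1 + (-1/2)*k1*m1*n1); 0; ((1/64)*n3 + (3/32)*n2 + (1/64)*n1 + (1/2)*m3 + (1/8)*m2*n1 + (9/32)*m1*n2 + (-1/32)*m1*n1 + (1/2)*m1*m2*n1 + (3/8)*m1^2*n2 + (-1/8)*m1^2*n1 + (-1/8)*m1^3*n1 + (1/64)*k3 + (-7/64)*k2*n1 + (-3/32)*k2*m1 + (-1/4)*k2*m1*n1 + (-7/64)*k1*n2 + (-3/64)*k1*n1 + (1/16)*k1*n1^2 + (-1/8)*k1*m2 + (-1/2)*k1*m2*n1 + (-1/4)*k1*m1*n2 + (3/32)*k1*m1*n1 + (1/4)*k1*m1*n1^2 + (1/16)*k1*m1^2 + (5/16)*k1*m1^2*n1 + (1/4)*k1*m1^2*n1^2)])).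
  { eapply ap_ext; [|eapply ap_mulL; [exact H59|exact H58|coeqtac]]. exists 1; split; [lra|]; intros z Hz; cbv beta; try reflexivity; ring. }
  assert (HN : ap (fun z => fN z) (peval [(1); 0; (n1); 0; (n2); 0; (n3)])) by (apply expn_ap; exact HEfN).
  assert (HF : ap (fun z => fN z) (peval [(1); 0; ((1/4)*n1 + (1/2)*m1 + (1/4)*k1); 0; ((1/16)*n2 + (1/16)*n1 + (1/2)*m2 + (1/8)*m1*n1 + (1/4)*m1^2*n1 + (1/16)*k2 + (-3/16)*k1*n1 + (-1/8)*k1*m1 + (-1/2)*k1*m1*n1); 0; ((1/64)*n3 + (3/32)*n2 + (1/64)*n1 + (1/2)*m3 + (1/8)*m2*n1 + (9/32)*m1*n2 + (-1/32)*m1*n1 + (1/2)*m1*m2*n1 + (3/8)*m1^2*n2 + (-1/8)*m1^2*n1 + (-1/8)*m1^3*n1 + (1/64)*k3 + (-7/64)*k2*n1 + (-3/32)*k2*m1 + (-1/4)*k2*m1*n1 + (-7/64)*k1*n2 + (-3/64)*k1*n1 + (1/16)*k1*n1^2 + (-1/8)*k1*m2 + (-1/2)*k1*m2*n1 + (-1/4)*k1*m1*n2 + (3/32)*k1*m1*n1 + (1/4)*k1*m1*n1^2 + (1/16)*k1*m1^2 + (5/16)*k1*m1^2*n1 + (1/4)*k1*m1^2*n1^2)])).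
  { eapply ap_ext; [exact Hfe|exact H60]. }
  pose proof (ap_poly_coeffs _ _ (ap_trans _ _ _ (ap_sym _ _ HN) HF)) as Hc.
  pose proof (Hc 2%nat ltac:(lia)) as E2. pose proof (Hc 4%nat ltac:(lia)) as E4. pose proof (Hc 6%nat ltac:(lia)) as E6.
  cbn [nth] in E2, E4, E6. split; [|split]; assumption.
Qed.

Lemma final_P (m1 m2 m3 k1 k2 k3 : R) :
  chainC m1 m2 m3 m1 m2 m3 m1 m2 m3 -> chainC k1 k2 k3 k1 k2 k3 k1 k2 k3 ->
  chainC k1 k2 k3 m1 m2 m3 (-1/6) (-17/360) (-367/15120) -> False.
Proof.
  unfold chainC. intros [_ [HM4 HM6]] [_ [HK4 HK6]] [E2 [E4 E6]].
  assert (Hk1 : k1 = 3 * (-1/6) - 2 * m1) by lra.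
  assert (Hm2 : m2 = ((1/6)*m1^1 + (-1/2)*m1^2 + (-2/3)*m1^3)) by lra. subst m2.
  assert (Hm3 : m3 = ((1/15)*m1^1 + (-5/18)*m1^2 + (1/18)*m1^3 + (10/9)*m1^4 + (32/45)*m1^5)) by lra. subst m3.
  assert (Hk2 : k2 = ((1/6)*k1^1 + (-1/2)*k1^2 + (-2/3)*k1^3)) by lra. subst k2.
  assert (Hk3 : k3 = ((1/15)*k1^1 + (-5/18)*k1^2 + (1/18)*k1^3 + (10/9)*k1^4 + (32/45)*k1^5)) by lra. subst k3.
  subst k1.
  match type of E4 with ?a = ?b => match type of E6 with ?c = ?d =>
    assert (Hz : (d - c) - ((41/60)*m1^0 + (-2/3)*m1^1 + (-4/3)*m1^2) * (b - a) = (-1/1152)) by field;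
    rewrite <- E4, <- E6 in Hz end end.
  lra.
Qed.

Lemma final_T (m1 m2 m3 k1 k2 k3 : R) :
  chainC m1 m2 m3 m1 m2 m3 m1 m2 m3 -> chainC k1 k2 k3 k1 k2 k3 k1 k2 k3 ->
  chainC k1 k2 k3 m1 m2 m3 (1/3) (-4/45) (44/945) -> False.
Proof.
  unfold chainC. intros [_ [HM4 HM6]] [_ [HK4 HK6]] [E2 [E4 E6]].
  assert (Hk1 : k1 = 3 * (1/3) - 2 * m1) by lra.
  assert (Hm2 : m2 = ((1/6)*m1^1 + (-1/2)*m1^2 + (-2/3)*m1^3)) by lra. subst m2.
  assert (Hm3 : m3 = ((1/15)*m1^1 + (-5/18)*m1^2 + (1/18)*m1^3 + (10/9)*m1^4 + (32/45)*m1^5)) by lra. subst m3.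
  assert (Hk2 : k2 = ((1/6)*k1^1 + (-1/2)*k1^2 + (-2/3)*k1^3)) by lra. subst k2.
  assert (Hk3 : k3 = ((1/15)*k1^1 + (-5/18)*k1^2 + (1/18)*k1^3 + (10/9)*k1^4 + (32/45)*k1^5)) by lra. subst k3.
  subst k1.
  match type of E4 with ?a = ?b => match type of E6 with ?c = ?d =>
    assert (Hz : (d - c) - ((-109/150)*m1^0 + (1/3)*m1^1 + (-4/3)*m1^2) * (b - a) = (-1/1800)) by field;
    rewrite <- E4, <- E6 in Hz end end.
  lra.
Qed.

Lemma final_NS (m1 m2 m3 k1 k2 k3 : R) :
  chainC m1 m2 m3 m1 m2 m3 m1 m2 m3 -> chainC k1 k2 k3 k1 k2 k3 k1 k2 k3 ->
  chainC k1 k2 k3 m1 m2 m3 (1/6) (-17/360) (367/15120) -> False.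
Proof.
  unfold chainC. intros [_ [HM4 HM6]] [_ [HK4 HK6]] [E2 [E4 E6]].
  assert (Hk1 : k1 = 3 * (1/6) - 2 * m1) by lra.
  assert (Hm2 : m2 = ((1/6)*m1^1 + (-1/2)*m1^2 + (-2/3)*m1^3)) by lra. subst m2.
  assert (Hm3 : m3 = ((1/15)*m1^1 + (-5/18)*m1^2 + (1/18)*m1^3 + (10/9)*m1^4 + (32/45)*m1^5)) by lra. subst m3.
  assert (Hk2 : k2 = ((1/6)*k1^1 + (-1/2)*k1^2 + (-2/3)*k1^3)) by lra. subst k2.
  assert (Hk3 : k3 = ((1/15)*k1^1 + (-5/18)*k1^2 + (1/18)*k1^3 + (10/9)*k1^4 + (32/45)*k1^5)) by lra. subst k3.
  subst k1.
  match type of E4 with ?a = ?b => match type of E6 with ?c = ?d =>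
    assert (Hz : (d - c) - ((-3/40)*m1^0 + (-4/3)*m1^2) * (b - a) = (-79/3840)) by field;
    rewrite <- E4, <- E6 in Hz end end.
  lra.
Qed.

Lemma no_stab (g : R -> R) T1 T2 T3 :
  (forall w, -1 < w < 1 -> w <> 0 -> g w <> 0) ->
  expn_on (fun w => 0 <= w) (fun w => Ng g (1 - w) (1 + w)) T1 T2 T3 ->
  (forall m1 m2 m3 k1 k2 k3, chainC m1 m2 m3 m1 m2 m3 m1 m2 m3 -> chainC k1 k2 k3 k1 k2 k3 k1 k2 k3 ->
     chainC k1 k2 k3 m1 m2 m3 T1 T2 T3 -> False) ->
  ~ exists K M : R -> R -> R, good_mean K /\ good_mean M /\ stabilizable (Ng g) K M.
Proof.
  intros Hg HE Hfin [K [M [GK [GM Hst]]]].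
  destruct GK as [mK [sK [hK [stK [aK eK]]]]].
  destruct GM as [mM [sM [hM [stM [aM eM]]]]].
  pose proof (expn_of K aK mK hK eK) as HEKn.
  pose proof (expn_even _ _ _ _ HEKn (even_of K sK)) as HEK.
  pose proof (expn_of M aM mM hM eM) as HEMn.
  pose proof (expn_even _ _ _ _ HEMn (even_of M sM)) as HEM.
  assert (mbM : forall z, 0 < z < 1 -> 1 - z <= (fun w => M (1 - w) (1 + w)) z <= 1 + z)
    by (intros z Hz; apply meanb_of; auto; lra).
  assert (mbK : forall z, 0 < z < 1 -> 1 - z <= (fun w => K (1 - w) (1 + w)) z <= 1 + z)
    by (intros z Hz; apply meanb_of; auto; lra).
  pose proof (chain _ _ _ _ _ _ _ _ _ _ _ _ HEM HEMn HEMn mbM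
    (glue M M M _ _ _ (rep_hom M hM) (rep_hom M hM) (rep_hom M hM) mbM (lower_of_expn _ _ _ _ HEMn) stM)) as CM.
  pose proof (chain _ _ _ _ _ _ _ _ _ _ _ _ HEK HEKn HEKn mbK
    (glue K K K _ _ _ (rep_hom K hK) (rep_hom K hK) (rep_hom K hK) mbK (lower_of_expn _ _ _ _ HEKn) stK)) as CK.
  pose proof (chain _ _ _ _ _ _ _ _ _ _ _ _ HEK HEMn HE mbM
    (glue (Ng g) K M _ _ _ (rep_hom K hK) (rep_hom M hM) (rep_Ng g Hg) mbM (lower_of_expn _ _ _ _ HE) Hst)) as CN.
  exact (Hfin _ _ _ _ _ _ CM CK CN).
Qed.

Lemma expn_P : expn_on (fun w => 0 <= w) (fun w => Ng asin (1 - w) (1 + w)) (-1/6) (-17/360) (-367/15120).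
Proof.
  apply (expn_Ng asin _ _ _ (1/6) (3/40) (5/112)).
  - intros w Hw. apply gneq_asin; lra.
  - apply (ap_from_bound _ _ _ _ 2). exact bound_asin.
  - coeqtac.
Qed.
Lemma expn_T : expn_on (fun w => 0 <= w) (fun w => Ng atan (1 - w) (1 + w)) (1/3) (-4/45) (44/945).
Proof.
  apply (expn_Ng atan _ _ _ (-1/3) (1/5) (-1/7)).
  - intros w Hw. apply gneq_atan; lra.
  - apply (ap_from_bound _ _ _ _ 1). exact bound_atan.
  - coeqtac.
Qed.
Lemma expn_NS : expn_on (fun w => 0 <= w) (fun w => Ng arcsinh (1 - w) (1 + w)) (1/6) (-17/360) (367/15120).
Proof.
  apply (expn_Ng arcsinh _ _ _ (-1/6) (3/40) (-5/112)).
  - intros w Hw. apply gneq_arcsinh; lra.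
  - apply (ap_from_bound _ _ _ _ 1). exact bound_arcsinh.
  - coeqtac.
Qed.

Theorem mainTheorem16 :
  (~ exists K M : R -> R -> R, good_mean K /\ good_mean M /\ stabilizable SeiffertP K M) /\
  (~ exists K M : R -> R -> R, good_mean K /\ good_mean M /\ stabilizable SeiffertT K M) /\
  (~ exists K M : R -> R -> R, good_mean K /\ good_mean M /\ stabilizable NeumanSandor K M).
Proof.
  split; [|split].
  - exact (no_stab asin _ _ _ gneq_asin expn_P final_P).
  - exact (no_stab atan _ _ _ gneq_atan expn_T final_T).
  - exact (no_stab arcsinh _ _ _ gneq_arcsinh expn_NS final_NS).
Qed.
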